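(* Let $F:\mathbb Z^2\to\Lambda \mathrm{SU}_2$ be a discrete extended frame with data $u,p,q$ (as defined in the context). For every $(n,m)\in\mathbb Z^2$ decompose $F(n,m)$ by the two Birkhoff decompositions $$F=F_+F_-=G_-G_+,\qquad F_+\in\Lambda^+_*\mathrm{SU}_2,\ F_-\in\Lambda^-\mathrm{SU}_2,\ G_-\in\Lambda^-_*\mathrm{SU}_2,\ G_+\in\Lambda^+\mathrm{SU}_2 .$$ Then $F_+(n,m)$ does not depend on $m$ and $G_-(n,m)$ does not depend on $n$, and $$\xi_+:=F_+(n,m)^{-1}F_+(n+1,m)=\frac{1}{\Delta_+}\begin{pmatrix}1&\frac{i}{2}p\,e^{-i\alpha}\lambda\\ \frac{i}{2}p\,e^{i\alpha}\lambda&1\end{pmatrix},\qquad \xi_-:=G_-(n,m)^{-1}G_-(n,m+1)=\frac{1}{\Delta_-}\begin{pmatrix}1&-\frac{i}{2}q\,e^{i\beta}\lambda^{-1}\\ -\frac{i}{2}q\,e^{-i\beta}\lambda^{-1}&1\end{pmatrix},$$ where $p=p(n)$, $q=q(m)$, and $\alpha=\alpha(n)$, $\beta=\beta(m)$ are given by $$\alpha(n)=\tfrac12 u(n+1,0)+\tfrac12 u(n,0)-u(0,0),\qquad \beta(m)=\tfrac12 u(0,m+1)+\tfrac12 u(0,m).$$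
   Context: Pauli matrices: $\sigma_1=\begin{pmatrix}0&1\\1&0\end{pmatrix}$, $\sigma_2=\begin{pmatrix}0&-i\\i&0\end{pmatrix}$, $\sigma_3=\begin{pmatrix}1&0\\0&-1\end{pmatrix}$. Loop groups: $\Lambda\mathrm{SU}_2$ is the group of maps $g$ of the spectral parameter $\lambda$ (defined on $S^1\cup\mathbb R^\times$) into $\mathrm{SL}_2\mathbb C$ whose matrix entries lie in the Wiener algebra $\{\sum_{k\in\mathbb Z}f_k\lambda^k:\sum|f_k|<\infty\}$, satisfying the reality condition $g(\lambda)=\big(\overline{g(\bar\lambda)}^{\,t}\big)^{-1}$ and the twisting condition $\sigma_3g(\lambda)\sigma_3^{-1}=g(-\lambda)$. $\Lambda^+\mathrm{SU}_2$ (resp. $\Lambda^-\mathrm{SU}_2$) is the subgroup of loops extending holomorphically to the open unit disk (resp. to $\{|\lambda|>1\}\cup\{\infty\}$); $\Lambda^+_*\mathrm{SU}_2=\{g\in\Lambda^+\mathrm{SU}_2:g(0)=\mathrm{Id}\}$ and $\Lambda^-_*\mathrm{SU}_2=\{g\in\Lambda^-\mathrm{SU}_2:g(\infty)=\mathrm{Id}\}$. Birkhoff decomposition (known fact): the multiplication maps $\Lambda^+_*\mathrm{SU}_2\times\Lambda^-\mathrm{SU}_2\to\Lambda\mathrm{SU}_2$ and $\Lambda^-_*\mathrm{SU}_2\times\Lambda^+\mathrm{SU}_2\to\Lambda\mathrm{SU}_2$ are diffeomorphisms onto $\Lambda\mathrm{SU}_2$; so every loop factors uniquely in each of these two ways.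 Discrete setting: for a function $f$ on $\mathbb Z^2$ write $f_1=f(n+1,m)$, $f_2=f(n,m+1)$, $f_{12}=f(n+1,m+1)$. Let $p:\mathbb Z\to\mathbb R$ (a function of $n$) and $q:\mathbb Z\to\mathbb R$ (a function of $m$) satisfy $0<|p/2|<1$, $0<|q/2|<1$, and put $\Delta_+=\sqrt{1+(p/2)^2\lambda^2}$, $\Delta_-=\sqrt{1+(q/2)^2\lambda^{-2}}$ (branches positive for $\lambda>0$; $\Delta_+$ is holomorphic and nonvanishing on the closed unit disk, $\Delta_-$ on its closed exterior including $\infty$). For $u:\mathbb Z^2\to\mathbb R$ set $$U=\frac1{\Delta_+}\begin{pmatrix}e^{-\frac i2(u_1-u)}&\frac i2p\lambda\\ \frac i2p\lambda&e^{\frac i2(u_1-u)}\end{pmatrix},\qquad V=\frac1{\Delta_-}\begin{pmatrix}1&-\frac i2q\,e^{\frac i2(u_2+u)}\lambda^{-1}\\ -\frac i2q\,e^{-\frac i2(u_2+u)}\lambda^{-1}&1\end{pmatrix}.$$ A discrete extended frame with data $u,p,q$ is a map $F:\mathbb Z^2\to\Lambda\mathrm{SU}_2$ with $F(0,0)=\mathrm{Id}$, $F_1=FU$ and $F_2=FV$. (Its compatibility $VU_2=UV_1$ is the discrete sine-Gordon equation $\sin\frac{u_{12}-u_1-u_2+u}{4}=\frac{pq}{4}\sin\frac{u_{12}+u_1+u_2+u}{4}$.) The associated discrete pseudospherical surfaces are $f^\lambda=\lambda\,(\partial_\lambda F)F^{-1}$, $\lambda>0$. *)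

(* Defs.v *)
From Stdlib Require Import Reals ZArith.
Open Scope R_scope.

Record Cplx := mkC { Re : R ; Im : R }.

Definition RtoC (x : R) : Cplx := mkC x 0.
Definition C0 : Cplx := mkC 0 0.
Definition C1 : Cplx := mkC 1 0.
Definition Ci : Cplx := mkC 0 1.
Definition Cadd (z w : Cplx) : Cplx := mkC (Re z + Re w) (Im z + Im w).
Definition Copp (z : Cplx) : Cplx := mkC (- Re z) (- Im z).
Definition Cmul (z w : Cplx) : Cplx :=
  mkC (Re z * Re w - Im z * Im w) (Re z * Im w + Im z * Re w).
Definition Cconj (z : Cplx) : Cplx := mkC (Re z) (- Im z).
Definition Cnorm2 (z : Cplx) : R := Re z * Re z + Im z * Im z.
Definition Cnorm (z : Cplx) : R := sqrt (Cnorm2 z).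
Definition Cinv (z : Cplx) : Cplx := mkC (Re z / Cnorm2 z) (- Im z / Cnorm2 z).
Definition Cexpi (theta : R) : Cplx := mkC (cos theta) (sin theta).
(* principal square root (branch cut on the negative real axis) *)
Definition Csqrt (z : Cplx) : Cplx :=
  mkC (sqrt ((Cnorm z + Re z) / 2))
      ((if Rlt_dec (Im z) 0 then -1 else 1) * sqrt ((Cnorm z - Re z) / 2)).
Fixpoint Cpow (z : Cplx) (n : nat) : Cplx :=
  match n with O => C1 | S k => Cmul z (Cpow z k) end.
Definition Cpowz (z : Cplx) (k : Z) : Cplx :=
  if (0 <=? k)%Z then Cpow z (Z.to_nat k) else Cinv (Cpow z (Z.to_nat (- k))).

Definition onS1 (l : Cplx) : Prop := Cnorm2 l = 1.

Record M2 := mkM2 { a11 : Cplx ; a12 : Cplx ; a21 : Cplx ; a22 : Cplx }.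

Definition Mid : M2 := mkM2 C1 C0 C0 C1.
Definition Mzero : M2 := mkM2 C0 C0 C0 C0.
Definition Mmul (A B : M2) : M2 :=
  mkM2 (Cadd (Cmul (a11 A) (a11 B)) (Cmul (a12 A) (a21 B)))
       (Cadd (Cmul (a11 A) (a12 B)) (Cmul (a12 A) (a22 B)))
       (Cadd (Cmul (a21 A) (a11 B)) (Cmul (a22 A) (a21 B)))
       (Cadd (Cmul (a21 A) (a12 B)) (Cmul (a22 A) (a22 B))).
Definition Mscal (c : Cplx) (A : M2) : M2 :=
  mkM2 (Cmul c (a11 A)) (Cmul c (a12 A)) (Cmul c (a21 A)) (Cmul c (a22 A)).
Definition Mdet (A : M2) : Cplx :=
  Cadd (Cmul (a11 A) (a22 A)) (Copp (Cmul (a12 A) (a21 A))).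
Definition Minv (A : M2) : M2 :=
  Mscal (Cinv (Mdet A)) (mkM2 (a22 A) (Copp (a12 A)) (Copp (a21 A)) (a11 A)).
Definition Mstar (A : M2) : M2 :=
  mkM2 (Cconj (a11 A)) (Cconj (a21 A)) (Cconj (a12 A)) (Cconj (a22 A)).
Definition sigma3 : M2 := mkM2 C1 C0 C0 (Copp C1).

Definition Cseries_cv (a : nat -> Cplx) (w : Cplx) : Prop :=
  Un_cv (fun N => sum_f_R0 (fun n => Re (a n)) N) (Re w) /\
  Un_cv (fun N => sum_f_R0 (fun n => Im (a n)) N) (Im w).

Definition abs_summable_Z (f : Z -> Cplx) : Prop :=
  exists l : R, Un_cv (fun N => sum_f_R0
     (fun n => Cnorm (f (Z.of_nat n)) + Cnorm (f (- Z.of_nat n)%Z)) N) l.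

(* the Laurent series sum_{k in Z} f_k l^k, grouped symmetrically *)
Definition laurent_term (f : Z -> Cplx) (l : Cplx) (n : nat) : Cplx :=
  Cadd (Cmul (f (Z.of_nat n)) (Cpowz l (Z.of_nat n)))
       (if Nat.eqb n 0 then C0
        else Cmul (f (- Z.of_nat n)%Z) (Cpowz l (- Z.of_nat n)%Z)).

Definition wiener_coeffs (g : Cplx -> Cplx) (f : Z -> Cplx) : Prop :=
  abs_summable_Z f /\
  forall l, onS1 l -> Cseries_cv (laurent_term f l) (g l).

Definition loop_coeffs (g : Cplx -> M2) (c : Z -> M2) : Prop :=
  wiener_coeffs (fun l => a11 (g l)) (fun k => a11 (c k)) /\
  wiener_coeffs (fun l => a12 (g l)) (fun k => a12 (c k)) /\
  wiener_coeffs (fun l => a21 (g l)) (fun k => a21 (c k)) /\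
  wiener_coeffs (fun l => a22 (g l)) (fun k => a22 (c k)).

(* Lambda SU_2 : SL_2(Cplx)-valued Wiener loops with reality and twisting conditions *)
Definition LambdaSU2 (g : Cplx -> M2) : Prop :=
  (exists c, loop_coeffs g c) /\
  forall l, onS1 l ->
    Mdet (g l) = C1 /\
    g l = Minv (Mstar (g (Cconj l))) /\
    Mmul (Mmul sigma3 (g l)) (Minv sigma3) = g (Copp l).

(* holomorphic extension to the open unit disk: no negative Fourier modes *)
Definition LambdaPlus (g : Cplx -> M2) : Prop :=
  LambdaSU2 g /\
  exists c, loop_coeffs g c /\ forall k, (k < 0)%Z -> c k = Mzero.
(* ... and g(0) = Id *)
Definition LambdaPlusStar (g : Cplx -> M2) : Prop :=
  LambdaSU2 g /\
  exists c, loop_coeffs g c /\ (forall k, (k < 0)%Z -> c k = Mzero) /\ c 0%Z = Mid.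
(* holomorphic extension to {|l|>1} u {oo}: no positive Fourier modes *)
Definition LambdaMinus (g : Cplx -> M2) : Prop :=
  LambdaSU2 g /\
  exists c, loop_coeffs g c /\ forall k, (0 < k)%Z -> c k = Mzero.
(* ... and g(oo) = Id *)
Definition LambdaMinusStar (g : Cplx -> M2) : Prop :=
  LambdaSU2 g /\
  exists c, loop_coeffs g c /\ (forall k, (0 < k)%Z -> c k = Mzero) /\ c 0%Z = Mid.

Definition halfI (x : R) : Cplx := mkC 0 (x / 2).

Definition DeltaP (p : R) (l : Cplx) : Cplx :=
  Csqrt (Cadd C1 (Cmul (RtoC ((p / 2) ^ 2)) (Cmul l l))).
Definition DeltaM (q : R) (l : Cplx) : Cplx :=
  Csqrt (Cadd C1 (Cmul (RtoC ((q / 2) ^ 2)) (Cinv (Cmul l l)))).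

Definition Umat (u : Z -> Z -> R) (p : Z -> R) (n m : Z) (l : Cplx) : M2 :=
  Mscal (Cinv (DeltaP (p n) l))
    (mkM2 (Cexpi (- (u (n + 1)%Z m - u n m) / 2))
          (Cmul (halfI (p n)) l)
          (Cmul (halfI (p n)) l)
          (Cexpi ((u (n + 1)%Z m - u n m) / 2))).

Definition Vmat (u : Z -> Z -> R) (q : Z -> R) (n m : Z) (l : Cplx) : M2 :=
  Mscal (Cinv (DeltaM (q m) l))
    (mkM2 C1
          (Copp (Cmul (Cmul (halfI (q m)) (Cexpi ((u n (m + 1)%Z + u n m) / 2))) (Cinv l)))
          (Copp (Cmul (Cmul (halfI (q m)) (Cexpi (- (u n (m + 1)%Z + u n m) / 2))) (Cinv l)))
          C1).

Definition discrete_extended_frame (F : Z -> Z -> Cplx -> M2)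
    (u : Z -> Z -> R) (p q : Z -> R) : Prop :=
  (forall n m, LambdaSU2 (F n m)) /\
  (forall l, onS1 l -> F 0%Z 0%Z l = Mid) /\
  (forall n m l, onS1 l -> F (n + 1)%Z m l = Mmul (F n m l) (Umat u p n m l)) /\
  (forall n m l, onS1 l -> F n (m + 1)%Z l = Mmul (F n m l) (Vmat u q n m l)).

Definition alpha (u : Z -> Z -> R) (n : Z) : R :=
  / 2 * u (n + 1)%Z 0%Z + / 2 * u n 0%Z - u 0%Z 0%Z.
Definition beta (u : Z -> Z -> R) (m : Z) : R :=
  / 2 * u 0%Z (m + 1)%Z + / 2 * u 0%Z m.

Definition xi_plus (p a : R) (l : Cplx) : M2 :=
  Mscal (Cinv (DeltaP p l))
    (mkM2 C1 (Cmul (Cmul (halfI p) (Cexpi (- a))) l)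
             (Cmul (Cmul (halfI p) (Cexpi a)) l) C1).
Definition xi_minus (q b : R) (l : Cplx) : M2 :=
  Mscal (Cinv (DeltaM q l))
    (mkM2 C1 (Copp (Cmul (Cmul (halfI q) (Cexpi b)) (Cinv l)))
             (Copp (Cmul (Cmul (halfI q) (Cexpi (- b))) (Cinv l))) C1).

(* Main.v *)
From Coquelicot Require Import Coquelicot.
From Stdlib Require Import Reals ZArith Lra Lia Psatz FunctionalExtensionality.
Require Import Defs.
Open Scope R_scope.

Lemma Ceq z w : Re z = Re w -> Im z = Im w -> z = w.
Proof. destruct z, w; simpl; intros; subst; reflexivity. Qed.

Ltac Csimpl := unfold Cadd, Cmul, Copp, Cconj, RtoC, C0, C1, Ci in *; simpl.
Ltac Cring := apply Ceq; Csimpl; ring.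

Lemma Meq A B : a11 A = a11 B -> a12 A = a12 B -> a21 A = a21 B -> a22 A = a22 B -> A = B.
Proof. destruct A, B; simpl; intros; subst; reflexivity. Qed.

Definition n1 (z : Cplx) : R := Rabs (Re z) + Rabs (Im z).

Lemma n1_ge0 z : 0 <= n1 z.
Proof. unfold n1; pose proof (Rabs_pos (Re z)); pose proof (Rabs_pos (Im z)); lra. Qed.

Lemma n1_mul z w : n1 (Cmul z w) <= n1 z * n1 w.
Proof.
  unfold n1, Cmul; simpl.
  pose proof (Rabs_triang (Re z * Re w) (- (Im z * Im w))).
  pose proof (Rabs_triang (Re z * Im w) (Im z * Re w)).
  rewrite Rabs_Ropp in H. rewrite !Rabs_mult in H, H0.
  pose proof (Rabs_pos (Re z)); pose proof (Rabs_pos (Im z));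
  pose proof (Rabs_pos (Re w)); pose proof (Rabs_pos (Im w)).
  unfold Rminus. nra.
Qed.

Lemma n1_add z w : n1 (Cadd z w) <= n1 z + n1 w.
Proof.
  unfold n1, Cadd; simpl.
  pose proof (Rabs_triang (Re z) (Re w)); pose proof (Rabs_triang (Im z) (Im w)); lra.
Qed.

Lemma Cnorm2_mul z w : Cnorm2 (Cmul z w) = Cnorm2 z * Cnorm2 w.
Proof. unfold Cnorm2, Cmul; simpl; ring. Qed.

Lemma Cpow_add z n m : Cpow z (n + m) = Cmul (Cpow z n) (Cpow z m).
Proof.
  induction n; simpl.
  - Cring.
  - rewrite IHn. Cring.
Qed.

Lemma Cnorm2_pow l k : onS1 l -> Cnorm2 (Cpow l k) = 1.
Proof.
  intro H; induction k; simpl.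
  - unfold Cnorm2, C1; simpl; ring.
  - rewrite Cnorm2_mul, IHk, H; ring.
Qed.

Lemma unit_bound z : Cnorm2 z = 1 -> Rabs (Re z) <= 1 /\ Rabs (Im z) <= 1.
Proof.
  unfold Cnorm2; intro H; split; apply Rabs_le; split; nra.
Qed.

Lemma n1_pow l k : onS1 l -> n1 (Cpow l k) <= 2.
Proof.
  intro H; destruct (unit_bound _ (Cnorm2_pow l k H)); unfold n1; lra.
Qed.

Lemma n1_mulpow a l k : onS1 l -> n1 (Cmul a (Cpow l k)) <= 2 * n1 a.
Proof.
  intro H; eapply Rle_trans; [apply n1_mul|].
  pose proof (n1_pow l k H); pose proof (n1_ge0 a); nra.
Qed.

Definition Csumn (f : nat -> Cplx) (n : nat) : Cplx :=
  mkC (sum_f_R0 (fun k => Re (f k)) n) (sum_f_R0 (fun k => Im (f k)) n).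

Definition CAbs (A : nat -> Cplx) : Prop := ex_series (fun k => n1 (A k)).

Lemma Un_cv_is_series a l : Un_cv (fun N => sum_f_R0 a N) l <-> is_series a l.
Proof. rewrite is_series_Reals. unfold infinite_sum, Un_cv. tauto. Qed.

Lemma CAbs_Re A : CAbs A -> ex_series (fun k => Rabs (Re (A k))).
Proof.
  intro H. apply (@ex_series_le R_AbsRing R_CompleteNormedModule _ (fun k => n1 (A k))); auto.
  intro n. change (norm (Rabs (Re (A n)))) with (Rabs (Rabs (Re (A n)))).
  rewrite Rabs_Rabsolu. unfold n1. pose proof (Rabs_pos (Im (A n))); lra.
Qed.

Lemma CAbs_Im A : CAbs A -> ex_series (fun k => Rabs (Im (A k))).
Proof.
  intro H. apply (@ex_series_le R_AbsRing R_CompleteNormedModule _ (fun k => n1 (A k))); auto.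
  intro n. change (norm (Rabs (Im (A n)))) with (Rabs (Rabs (Im (A n)))).
  rewrite Rabs_Rabsolu. unfold n1. pose proof (Rabs_pos (Re (A n))); lra.
Qed.

Lemma Cseries_mult A B a b :
  Cseries_cv A a -> Cseries_cv B b -> CAbs A -> CAbs B ->
  Cseries_cv (fun n => Csumn (fun k => Cmul (A k) (B (n - k)%nat)) n) (Cmul a b).
Proof.
  intros [Ha1 Ha2] [Hb1 Hb2] HA HB.
  rewrite Un_cv_is_series in Ha1, Ha2, Hb1, Hb2.
  pose proof (is_series_mult _ _ _ _ Ha1 Hb1 (CAbs_Re _ HA) (CAbs_Re _ HB)) as M11.
  pose proof (is_series_mult _ _ _ _ Ha2 Hb2 (CAbs_Im _ HA) (CAbs_Im _ HB)) as M22.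
  pose proof (is_series_mult _ _ _ _ Ha1 Hb2 (CAbs_Re _ HA) (CAbs_Im _ HB)) as M12.
  pose proof (is_series_mult _ _ _ _ Ha2 Hb1 (CAbs_Im _ HA) (CAbs_Re _ HB)) as M21.
  split; simpl; rewrite Un_cv_is_series.
  - pose proof (is_series_minus _ _ _ _ M11 M22) as H.
    eapply is_series_ext; [|exact H]. intro n; simpl.
    unfold minus, plus, opp; simpl. rewrite minus_sum. ring.
  - pose proof (is_series_plus _ _ _ _ M12 M21) as H.
    eapply is_series_ext; [|exact H]. intro n; simpl.
    unfold plus; simpl. rewrite plus_sum. reflexivity.
Qed.
Lemma Cseries_add A B a b : Cseries_cv A a -> Cseries_cv B b ->
  Cseries_cv (fun k => Cadd (A k) (B k)) (Cadd a b).
Proof.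
  intros [H1 H2] [H3 H4]; split; simpl.
  - eapply Un_cv_ext; [|apply (CV_plus _ _ _ _ H1 H3)]. intro n; simpl. rewrite plus_sum; reflexivity.
  - eapply Un_cv_ext; [|apply (CV_plus _ _ _ _ H2 H4)]. intro n; simpl. rewrite plus_sum; reflexivity.
Qed.

Lemma Un_cv_const c : Un_cv (fun _ => c) c.
Proof. intros eps H; exists 0%nat; intros; unfold Rdist; rewrite Rminus_diag, Rabs_R0; lra. Qed.

Lemma Un_cv_lin u v x y c d : Un_cv u x -> Un_cv v y ->
  Un_cv (fun n => c * u n + d * v n) (c * x + d * y).
Proof.
  intros H1 H2. apply CV_plus.
  - apply (CV_mult (fun _ => c)); auto. apply Un_cv_const.
  - apply (CV_mult (fun _ => d)); auto. apply Un_cv_const.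
Qed.

Lemma sum_lin (f g : nat -> R) c d n :
  sum_f_R0 (fun k => c * f k + d * g k) n = c * sum_f_R0 f n + d * sum_f_R0 g n.
Proof. induction n; simpl; [ring| rewrite IHn; ring]. Qed.

Lemma Cseries_scal c A a : Cseries_cv A a ->
  Cseries_cv (fun k => Cmul c (A k)) (Cmul c a).
Proof.
  intros [H1 H2]; split; simpl.
  - replace (Re c * Re a - Im c * Im a) with (Re c * Re a + - Im c * Im a) by ring.
    eapply Un_cv_ext; [|apply (Un_cv_lin _ _ _ _ (Re c) (- Im c) H1 H2)].
    intro n; simpl. rewrite <- sum_lin. apply sum_eq; intros; ring.
  - replace (Re c * Im a + Im c * Re a) with (Im c * Re a + Re c * Im a) by ring.
    eapply Un_cv_ext; [|apply (Un_cv_lin _ _ _ _ (Im c) (Re c) H1 H2)].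
    intro n; simpl. rewrite <- sum_lin. apply sum_eq; intros; ring.
Qed.

Lemma Cseries_unique A a b : Cseries_cv A a -> Cseries_cv A b -> a = b.
Proof.
  intros [H1 H2] [H3 H4]. apply Ceq; eapply UL_sequence; eauto.
Qed.

Lemma Cseries_ext A B a : (forall k, A k = B k) -> Cseries_cv A a -> Cseries_cv B a.
Proof. intros H; replace B with A; auto. apply functional_extensionality; auto. Qed.

Lemma ex_series_R_le (a b : nat -> R) : (forall n, 0 <= a n <= b n) -> ex_series b -> ex_series a.
Proof.
  intros H Hb. apply (@ex_series_le R_AbsRing R_CompleteNormedModule _ b); auto.
  intro n. change (norm (a n)) with (Rabs (a n)). rewrite Rabs_right; [apply H|]. destruct (H n); lra.
Qed.

Lemma ex_series_R_scal c (a : nat -> R) : ex_series a -> ex_series (fun n => c * a n).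
Proof. intro H. apply (@ex_series_scal_l R_AbsRing R_CompleteNormedModule c a H). Qed.

Lemma ex_series_R_plus (a b : nat -> R) : ex_series a -> ex_series b -> ex_series (fun n => a n + b n).
Proof. intros. apply (@ex_series_plus R_AbsRing R_CompleteNormedModule); auto. Qed.

Lemma CAbs_add A B : CAbs A -> CAbs B -> CAbs (fun k => Cadd (A k) (B k)).
Proof.
  intros HA HB. unfold CAbs. apply (ex_series_R_le _ (fun n => n1 (A n) + n1 (B n))).
  - intro n; split; [apply n1_ge0| apply n1_add].
  - apply ex_series_R_plus; auto.
Qed.

Lemma CAbs_scal c A : CAbs A -> CAbs (fun k => Cmul c (A k)).
Proof.
  intros HA. unfold CAbs. apply (ex_series_R_le _ (fun n => n1 c * n1 (A n))).
  - intro n; split; [apply n1_ge0| apply n1_mul].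
  - apply ex_series_R_scal; auto.
Qed.

Lemma n1_Csumn f n : n1 (Csumn f n) <= sum_f_R0 (fun k => n1 (f k)) n.
Proof.
  induction n; simpl.
  - unfold n1; simpl. lra.
  - unfold n1 in *; simpl in *.
    pose proof (Rabs_triang (sum_f_R0 (fun k => Re (f k)) n) (Re (f (S n)))).
    pose proof (Rabs_triang (sum_f_R0 (fun k => Im (f k)) n) (Im (f (S n)))). lra.
Qed.

Lemma ex_series_ex_is (a : nat -> R) : ex_series a -> exists l, is_series a l.
Proof. auto. Qed.

Definition conv (a b : nat -> Cplx) (n : nat) : Cplx :=
  Csumn (fun k => Cmul (a k) (b (n - k)%nat)) n.

Lemma CAbs_conv A B : CAbs A -> CAbs B -> CAbs (conv A B).
Proof.
  intros HA HB. unfold CAbs.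
  apply (ex_series_R_le _ (fun n => sum_f_R0 (fun k => n1 (A k) * n1 (B (n - k)%nat)) n)).
  - intro n; split; [apply n1_ge0|]. eapply Rle_trans; [apply n1_Csumn|].
    apply sum_Rle; intros. apply n1_mul.
  - destruct HA as [la Ha]; destruct HB as [lb Hb].
    exists (la * lb). apply (is_series_mult (fun k => n1 (A k)) (fun k => n1 (B k)) la lb Ha Hb).
    + eapply ex_series_ext; [|exists la; exact Ha]. intro n; simpl. rewrite Rabs_right; auto. apply Rle_ge, n1_ge0.
    + eapply ex_series_ext; [|exists lb; exact Hb]. intro n; simpl. rewrite Rabs_right; auto. apply Rle_ge, n1_ge0.
Qed.

Lemma Csumn_ext f g n : (forall k, (k <= n)%nat -> f k = g k) -> Csumn f n = Csumn g n.
Proof.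
  intro H; apply Ceq; simpl; apply sum_eq; intros; rewrite H; auto.
Qed.

Lemma Csumn_mul_r f c n : Csumn (fun k => Cmul (f k) c) n = Cmul (Csumn f n) c.
Proof.
  induction n; [Cring|]. apply Ceq.
  - change (Re (Csumn (fun k => Cmul (f k) c) (S n))) with
      (Re (Csumn (fun k => Cmul (f k) c) n) + Re (Cmul (f (S n)) c)).
    rewrite IHn. simpl. ring.
  - change (Im (Csumn (fun k => Cmul (f k) c) (S n))) with
      (Im (Csumn (fun k => Cmul (f k) c) n) + Im (Cmul (f (S n)) c)).
    rewrite IHn. simpl. ring.
Qed.

Definition PS (a : nat -> Cplx) (f : Cplx -> Cplx) : Prop :=
  CAbs a /\ forall l, onS1 l -> Cseries_cv (fun k => Cmul (a k) (Cpow l k)) (f l).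

Lemma CAbs_pow a l : onS1 l -> CAbs a -> CAbs (fun k => Cmul (a k) (Cpow l k)).
Proof.
  intros Hl Ha. unfold CAbs. apply (ex_series_R_le _ (fun n => 2 * n1 (a n))).
  - intro n; split; [apply n1_ge0| apply n1_mulpow; auto].
  - apply ex_series_R_scal; auto.
Qed.

Lemma PS_mul a b f g : PS a f -> PS b g -> PS (conv a b) (fun l => Cmul (f l) (g l)).
Proof.
  intros [Ha Hf] [Hb Hg]; split; [apply CAbs_conv; auto|].
  intros l Hl.
  pose proof (Cseries_mult _ _ _ _ (Hf l Hl) (Hg l Hl) (CAbs_pow _ _ Hl Ha) (CAbs_pow _ _ Hl Hb)) as H.
  eapply Cseries_ext; [|exact H]. intro n. simpl.
  unfold conv. rewrite <- Csumn_mul_r. apply Csumn_ext. intros k Hk.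
  replace (Cpow l n) with (Cpow l (k + (n - k))) by (f_equal; lia).
  rewrite Cpow_add. Cring.
Qed.

Lemma PS_add a b f g : PS a f -> PS b g ->
  PS (fun k => Cadd (a k) (b k)) (fun l => Cadd (f l) (g l)).
Proof.
  intros [Ha Hf] [Hb Hg]; split; [apply CAbs_add; auto|].
  intros l Hl. eapply Cseries_ext; [|apply (Cseries_add _ _ _ _ (Hf l Hl) (Hg l Hl))].
  intro k; simpl. Cring.
Qed.

Lemma PS_scal c a f : PS a f -> PS (fun k => Cmul c (a k)) (fun l => Cmul c (f l)).
Proof.
  intros [Ha Hf]; split; [apply CAbs_scal; auto|].
  intros l Hl. eapply Cseries_ext; [|apply (Cseries_scal c _ _ (Hf l Hl))].
  intro k; simpl. Cring.
Qed.

Lemma PS_fun a f g : PS a f -> (forall l, onS1 l -> f l = g l) -> PS a g.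
Proof. intros [Ha Hf] H; split; auto. intros l Hl; rewrite <- H; auto. Qed.

Lemma PS_coef a b f : PS a f -> (forall k, a k = b k) -> PS b f.
Proof. intros H E. replace b with a; auto. apply functional_extensionality; auto. Qed.

Lemma sum_stable (a : nat -> R) N n : (forall k, (N < k)%nat -> a k = 0) -> (N <= n)%nat ->
  sum_f_R0 a n = sum_f_R0 a N.
Proof.
  intros H Hn. destruct (Nat.eq_dec n N); [subst; auto|].
  rewrite (tech2 _ N n) by lia. rewrite (sum_eq_R0 (fun i => a (S N + i)%nat)); [ring|]. intros; apply H; lia.
Qed.

Lemma Cseries_finite A (N : nat) a : (forall k, (N < k)%nat -> A k = C0) ->
  Csumn A N = a -> Cseries_cv A a.
Proof.
  intros H E; subst a. split; simpl; intros eps Heps; exists N; intros n Hn; unfold Rdist.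
  - rewrite (sum_stable _ N n); [rewrite Rminus_diag, Rabs_R0; lra| |lia].
    intros; rewrite H by lia; reflexivity.
  - rewrite (sum_stable _ N n); [rewrite Rminus_diag, Rabs_R0; lra| |lia].
    intros; rewrite H by lia; reflexivity.
Qed.

Definition ccoef (c : Cplx) (k : nat) : Cplx := if Nat.eqb k 0 then c else C0.

Lemma ex_series_finite (a : nat -> R) N : (forall k, (N < k)%nat -> a k = 0) -> ex_series a.
Proof.
  intro H. exists (sum_f_R0 a N). apply Un_cv_is_series.
  intros eps Heps; exists N; intros n Hn. unfold Rdist.
  destruct (Nat.eq_dec n N); [subst; rewrite Rminus_diag, Rabs_R0; lra|].
  rewrite (sum_stable _ N n); [rewrite Rminus_diag, Rabs_R0; lra| auto |lia].
Qed.

Lemma PS_const c : PS (ccoef c) (fun _ => c).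
Proof.
  split.
  - apply (ex_series_finite _ 0). intros k Hk. unfold ccoef. destruct k; [lia|]. simpl. unfold n1; simpl; rewrite Rabs_R0; ring.
  - intros l Hl. apply (Cseries_finite _ 0).
    + intros k Hk; unfold ccoef; destruct k; [lia|]. simpl. Cring.
    + unfold ccoef; simpl. apply Ceq; simpl; ring.
Qed.

Definition shift (a : nat -> Cplx) (k : nat) : Cplx :=
  match k with O => C0 | S j => a j end.

Lemma Un_cv_shift u v L : (forall N, v (S N) = u N) -> Un_cv u L -> Un_cv v L.
Proof.
  intros E H eps Heps. destruct (H eps Heps) as [N HN]. exists (S N).
  intros n Hn. destruct n; [lia|]. rewrite E. apply HN. lia.
Qed.

Lemma sum_shift0 (g : nat -> R) N : g 0%nat = 0 ->
  sum_f_R0 g (S N) = sum_f_R0 (fun i => g (S i)) N.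
Proof.
  intro H. rewrite decomp_sum by lia. rewrite H. simpl. ring.
Qed.

Lemma Cseries_shift A B b : Cseries_cv B b -> A 0%nat = C0 -> (forall k, A (S k) = B k) ->
  Cseries_cv A b.
Proof.
  intros [H1 H2] E0 ES; split.
  - refine (Un_cv_shift _ _ _ _ H1). intro N. rewrite sum_shift0; [|cbv beta; rewrite E0; reflexivity].
    apply sum_eq; intros; rewrite ES; reflexivity.
  - refine (Un_cv_shift _ _ _ _ H2). intro N. rewrite sum_shift0; [|cbv beta; rewrite E0; reflexivity].
    apply sum_eq; intros; rewrite ES; reflexivity.
Qed.

Lemma PS_shift a f : PS a f -> PS (shift a) (fun l => Cmul l (f l)).
Proof.
  intros [Ha Hf]; split.
  - unfold CAbs in *. apply (ex_series_incr_1 (fun k => n1 (shift a k))). simpl. exact Ha.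
  - intros l Hl. apply (Cseries_shift _ _ _ (Cseries_scal l _ _ (Hf l Hl))).
    + simpl. Cring.
    + intro k. simpl. Cring.
Qed.
Definition Ccv (u : nat -> Cplx) (L : Cplx) : Prop :=
  Un_cv (fun n => Re (u n)) (Re L) /\ Un_cv (fun n => Im (u n)) (Im L).

Lemma Ccv_series A a : Cseries_cv A a -> Ccv (Csumn A) a.
Proof. intros [H1 H2]; split; simpl; auto. Qed.

Lemma Ccv_scal c u L : Ccv u L -> Ccv (fun n => Cmul c (u n)) (Cmul c L).
Proof.
  intros [H1 H2]; split; simpl.
  - replace (Re c * Re L - Im c * Im L) with (Re c * Re L + - Im c * Im L) by ring.
    eapply Un_cv_ext; [|apply (Un_cv_lin _ _ _ _ (Re c) (- Im c) H1 H2)]. intro; simpl; ring.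
  - replace (Re c * Im L + Im c * Re L) with (Im c * Re L + Re c * Im L) by ring.
    eapply Un_cv_ext; [|apply (Un_cv_lin _ _ _ _ (Im c) (Re c) H1 H2)]. intro; simpl; ring.
Qed.

Lemma Ccv_sum (u : nat -> nat -> Cplx) (L : nat -> Cplx) J :
  (forall j, (j <= J)%nat -> Ccv (u j) (L j)) ->
  Ccv (fun n => Csumn (fun j => u j n) J) (Csumn L J).
Proof.
  induction J; intro H.
  - destruct (H 0%nat (le_n _)) as [H1 H2]; split; simpl; auto.
  - destruct (IHJ ltac:(intros; apply H; lia)) as [H1 H2].
    destruct (H (S J) (le_n _)) as [H3 H4].
    split; simpl; apply CV_plus; auto.
Qed.

Lemma sum_exchange (h : nat -> nat -> R) J K :
  sum_f_R0 (fun j => sum_f_R0 (fun k => h j k) K) J =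
  sum_f_R0 (fun k => sum_f_R0 (fun j => h j k) J) K.
Proof.
  induction J; simpl.
  - reflexivity.
  - rewrite IHJ. rewrite <- plus_sum. reflexivity.
Qed.

Lemma Csumn_exchange (h : nat -> nat -> Cplx) J K :
  Csumn (fun j => Csumn (fun k => h j k) K) J = Csumn (fun k => Csumn (fun j => h j k) J) K.
Proof. apply Ceq; simpl; apply sum_exchange. Qed.

Lemma Csumn_mul_l f c n : Csumn (fun k => Cmul c (f k)) n = Cmul c (Csumn f n).
Proof.
  transitivity (Cmul (Csumn f n) c); [|Cring].
  rewrite <- Csumn_mul_r. apply Csumn_ext; intros; Cring.
Qed.

Lemma Csumn_add f g n : Csumn (fun k => Cadd (f k) (g k)) n = Cadd (Csumn f n) (Csumn g n).
Proof. apply Ceq; simpl; rewrite plus_sum; reflexivity. Qed.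

Lemma Csumn_single f m n : (m <= n)%nat -> (forall k, (k <= n)%nat -> k <> m -> f k = C0) ->
  Csumn f n = f m.
Proof.
  intros Hm H. induction n.
  - assert (m = 0%nat) by lia; subst. apply Ceq; reflexivity.
  - destruct (Nat.eq_dec m (S n)).
    + subst. assert (E : Csumn f n = C0).
      { apply Ceq; simpl; apply sum_eq_R0; intros; rewrite H by lia; reflexivity. }
      apply Ceq.
      * change (Re (Csumn f n) + Re (f (S n)) = Re (f (S n))). rewrite E; simpl; ring.
      * change (Im (Csumn f n) + Im (f (S n)) = Im (f (S n))). rewrite E; simpl; ring.
    + rewrite <- IHn by (lia || (intros; apply H; lia)).
      apply Ceq.
      * change (Re (Csumn f n) + Re (f (S n)) = Re (Csumn f n)). rewrite (H (S n)) by lia; simpl; ring.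
      * change (Im (Csumn f n) + Im (f (S n)) = Im (Csumn f n)). rewrite (H (S n)) by lia; simpl; ring.
Qed.

Lemma Cexpi_add x y : Cmul (Cexpi x) (Cexpi y) = Cexpi (x + y).
Proof. apply Ceq; simpl; [rewrite cos_plus| rewrite sin_plus]; ring. Qed.

Lemma Cpow_expi x k : Cpow (Cexpi x) k = Cexpi (INR k * x).
Proof.
  induction k.
  - apply Ceq; simpl; [rewrite Rmult_0_l, cos_0| rewrite Rmult_0_l, sin_0]; reflexivity.
  - simpl Cpow. rewrite IHk, Cexpi_add. f_equal. rewrite S_INR. ring.
Qed.

Lemma Cconj_expi x : Cconj (Cexpi x) = Cexpi (- x).
Proof. apply Ceq; simpl; [rewrite cos_neg| rewrite sin_neg]; reflexivity. Qed.

Lemma Cpow_conj z k : Cpow (Cconj z) k = Cconj (Cpow z k).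
Proof. induction k; simpl; [Cring| rewrite IHk; Cring]. Qed.

Lemma Cexpi_2PIk k : Cexpi (2 * PI * INR k) = C1.
Proof.
  apply Ceq; simpl.
  - replace (2 * PI * INR k) with (0 + 2 * INR k * PI) by ring. rewrite cos_period, cos_0; reflexivity.
  - replace (2 * PI * INR k) with (0 + 2 * INR k * PI) by ring. rewrite sin_period, sin_0; reflexivity.
Qed.

Lemma onS1_expi x : onS1 (Cexpi x).
Proof. unfold onS1, Cnorm2; simpl. rewrite Rplus_comm. apply sin2_cos2. Qed.

Lemma n1_expi x : n1 (Cexpi x) <= 2.
Proof. destruct (unit_bound _ (onS1_expi x)); unfold n1; lra. Qed.

Lemma geom_C (w : Cplx) n :
  Cmul (Csumn (fun j => Cpow w j) n) (Cadd w (Copp C1)) = Cadd (Cpow w (S n)) (Copp C1).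
Proof.
  induction n.
  - apply Ceq; simpl; ring.
  - assert (E : Csumn (fun j => Cpow w j) (S n) = Cadd (Csumn (fun j => Cpow w j) n) (Cpow w (S n)))
      by (apply Ceq; reflexivity).
    rewrite E. transitivity (Cadd (Cmul (Csumn (fun j => Cpow w j) n) (Cadd w (Copp C1)))
                                (Cmul (Cpow w (S n)) (Cadd w (Copp C1)))); [Cring|].
    rewrite IHn. change (Cpow w (S (S n))) with (Cmul w (Cpow w (S n))). Cring.
Qed.

Lemma Cmul_reg s d : Cmul s d = C0 -> d <> C0 -> s = C0.
Proof.
  intros H Hd. assert (Hn : Cnorm2 d <> 0).
  { intro E. apply Hd. unfold Cnorm2 in E. apply Ceq; simpl; nra. }
  assert (E : s = Cmul (Cmul s d) (Cinv d)).
  { destruct s as [s1 s2], d as [d1 d2]. unfold Cnorm2 in Hn; simpl in Hn.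
    apply Ceq; unfold Cinv, Cmul, Cnorm2; simpl; field; auto. }
  rewrite E, H. Cring.
Qed.

Definition dsum (N : nat) (r : R) : Cplx :=
  Csumn (fun j => Cexpi (INR j * (2 * PI * r / INR N))) (N - 1).

Lemma dsum_zero N k m : (1 <= N)%nat -> 0 < Rabs (INR k - INR m) < INR N ->
  dsum N (INR k - INR m) = C0.
Proof.
  intros HN Hr. unfold dsum.
  set (w := Cexpi (2 * PI * (INR k - INR m) / INR N)).
  assert (HNpos : 0 < INR N) by (apply lt_0_INR; lia).
  assert (Ew : forall j, Cexpi (INR j * (2 * PI * (INR k - INR m) / INR N)) = Cpow w j)
    by (intro j; unfold w; rewrite Cpow_expi; reflexivity).
  rewrite (Csumn_ext _ (fun j => Cpow w j)) by (intros; apply Ew).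
  apply (Cmul_reg _ (Cadd w (Copp C1))).
  - rewrite geom_C. replace (S (N - 1)) with N by lia.
    unfold w. rewrite Cpow_expi.
    replace (INR N * (2 * PI * (INR k - INR m) / INR N)) with (2 * PI * INR k + - (2 * PI * INR m))
      by (field; lra).
    rewrite <- Cexpi_add, <- Cconj_expi, !Cexpi_2PIk. Cring.
  - intro E. assert (E1 : Re (Cadd w (Copp C1)) = 0) by (rewrite E; reflexivity).
    unfold w in E1; simpl in E1.
    replace (2 * PI * (INR k - INR m) / INR N) with (2 * (PI * (INR k - INR m) / INR N)) in E1 by (field; lra).
    rewrite cos_2a_sin in E1.
    assert (Hs : sin (PI * (INR k - INR m) / INR N) <> 0).
    { pose proof PI_RGT_0.
      destruct (Rle_or_lt 0 (INR k - INR m)) as [Hpos|Hneg].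
      - rewrite Rabs_right in Hr by lra.
        apply Rgt_not_eq, sin_gt_0.
        + apply Rdiv_lt_0_compat; nra.
        + apply (Rmult_lt_reg_r (INR N)); auto. unfold Rdiv. rewrite Rmult_assoc, Rinv_l by lra. nra.
      - rewrite Rabs_left in Hr by lra.
        replace (PI * (INR k - INR m) / INR N) with (- (PI * (INR m - INR k) / INR N)) by (field; lra).
        rewrite sin_neg. apply Ropp_neq_0_compat, Rgt_not_eq, sin_gt_0.
        + apply Rdiv_lt_0_compat; nra.
        + apply (Rmult_lt_reg_r (INR N)); auto. unfold Rdiv. rewrite Rmult_assoc, Rinv_l by lra. nra. }
    apply Hs. nra.
Qed.

Lemma dsum_m N : (1 <= N)%nat -> dsum N 0 = mkC (INR N) 0.
Proof.
  intro HN. unfold dsum.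
  rewrite (Csumn_ext _ (fun _ => C1)).
  - apply Ceq; simpl.
    + rewrite sum_cte. replace (S (N - 1)) with N by lia. ring.
    + apply sum_eq_R0; auto.
  - intros j _. replace (2 * PI * 0 / INR N) with 0 by (unfold Rdiv; ring). rewrite Rmult_0_r.
    apply Ceq; simpl; [rewrite cos_0| rewrite sin_0]; reflexivity.
Qed.

Lemma n1_dsum N r : (1 <= N)%nat -> n1 (dsum N r) <= 2 * INR N.
Proof.
  intro HN. unfold dsum. eapply Rle_trans; [apply n1_Csumn|].
  eapply Rle_trans; [apply (sum_Rle _ (fun _ => 2)); intros; apply n1_expi|].
  rewrite sum_cte. replace (S (N - 1)) with N by lia. lra.
Qed.
Lemma masked_sum (x : nat -> R) N K : (1 <= N)%nat ->
  sum_f_R0 (fun k => if Nat.leb N k then x k else 0) K =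
  if Nat.leb N K then sum_f_R0 x K - sum_f_R0 x (N - 1) else 0.
Proof.
  intro HN. induction K.
  - simpl. destruct (Nat.leb N 0) eqn:E; [apply Nat.leb_le in E; lia| reflexivity].
  - simpl sum_f_R0 at 1. rewrite IHK.
    destruct (Nat.leb N K) eqn:E1; destruct (Nat.leb N (S K)) eqn:E2;
      try (apply Nat.leb_le in E1); try (apply Nat.leb_le in E2);
      try (apply Nat.leb_gt in E1); try (apply Nat.leb_gt in E2); try lia.
    + simpl. ring.
    + assert (N = S K) by lia. subst. replace (S K - 1)%nat with K by lia. simpl. ring.
    + ring.
Qed.

Lemma tail_small (x : nat -> R) : (forall k, 0 <= x k) -> ex_series x ->
  forall eps, 0 < eps -> exists N0, forall N, (N0 <= N)%nat -> (1 <= N)%nat ->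
  forall K, sum_f_R0 (fun k => if Nat.leb N k then x k else 0) K <= eps.
Proof.
  intros Hx [L HL] eps Heps. apply Un_cv_is_series in HL.
  assert (Hg : forall n, sum_f_R0 x n <= L).
  { apply growing_ineq; auto. intro n; simpl. specialize (Hx (S n)); lra. }
  destruct (HL eps Heps) as [N1 HN1]. exists (S N1). intros N HN H1 K.
  rewrite masked_sum by auto.
  destruct (Nat.leb N K); [|lra].
  specialize (HN1 (N - 1)%nat ltac:(lia)). unfold Rdist in HN1.
  specialize (Hg K). apply Rabs_def2 in HN1. lra.
Qed.

Lemma Un_cv_le u l N B : Un_cv u l -> (forall n, (N <= n)%nat -> u n <= B) -> l <= B.
Proof.
  intros H HB. destruct (Rle_or_lt l B); auto.
  destruct (H (l - B) ltac:(lra)) as [N1 HN1].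
  specialize (HN1 (max N N1) ltac:(lia)). specialize (HB (max N N1) ltac:(lia)).
  unfold Rdist in HN1. apply Rabs_def2 in HN1. lra.
Qed.

Lemma Un_cv_abs u l : Un_cv u l -> Un_cv (fun n => Rabs (u n)) (Rabs l).
Proof.
  intros H eps Heps. destruct (H eps Heps) as [N HN]. exists N. intros n Hn.
  unfold Rdist in *. eapply Rle_lt_trans; [apply Rabs_triang_inv2| apply HN; auto].
Qed.

Lemma Un_cv_minus_c u l c : Un_cv u l -> Un_cv (fun n => u n - c) (l - c).
Proof.
  intros H eps Heps. destruct (H eps Heps) as [N HN]. exists N. intros n Hn.
  unfold Rdist in *. replace (u n - c - (l - c)) with (u n - l) by ring. auto.
Qed.

Lemma Ccv_n1_bound u L c N B : Ccv u L ->
  (forall n, (N <= n)%nat -> n1 (Cadd (u n) (Copp c)) <= B) -> n1 (Cadd L (Copp c)) <= B.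
Proof.
  intros [H1 H2] HB. unfold n1 in *; simpl in *.
  apply (Un_cv_le (fun n => Rabs (Re (u n) + - Re c) + Rabs (Im (u n) + - Im c)) _ N); auto.
  apply CV_plus; apply Un_cv_abs; [exact (Un_cv_minus_c _ _ _ H1)| exact (Un_cv_minus_c _ _ _ H2)].
Qed.

Lemma Ccv_ext u v L : (forall n, u n = v n) -> Ccv u L -> Ccv v L.
Proof. intros E H. replace v with u; auto. apply functional_extensionality; auto. Qed.

Definition zeta (N j : nat) : Cplx := Cexpi (INR j * (2 * PI / INR N)).

Lemma phase_a N j m k : (1 <= N)%nat ->
  Cmul (Cpow (Cconj (zeta N j)) m) (Cpow (zeta N j) k) =
  Cexpi (INR j * (2 * PI * (INR k - INR m) / INR N)).
Proof.
  intro HN. unfold zeta. rewrite Cconj_expi, !Cpow_expi, Cexpi_add. f_equal.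
  field. apply not_0_INR; lia.
Qed.

Lemma phase_b N j m k : (1 <= N)%nat ->
  Cmul (Cpow (Cconj (zeta N j)) m) (Cpow (Cconj (zeta N j)) k) =
  Cexpi (INR j * (2 * PI * (INR 0 - INR (k + m)) / INR N)).
Proof.
  intro HN. unfold zeta. rewrite Cconj_expi, !Cpow_expi, Cexpi_add. f_equal.
  rewrite plus_INR. simpl. field. apply not_0_INR; lia.
Qed.

Lemma n1_opp z : n1 (Copp z) = n1 z.
Proof. unfold n1; simpl; rewrite !Rabs_Ropp; reflexivity. Qed.

Lemma n1_realmul (r : R) z : 0 <= r -> n1 (Cmul (mkC r 0) z) = r * n1 z.
Proof.
  intro H. unfold n1; simpl.
  replace (r * Re z - 0 * Im z) with (r * Re z) by ring.
  replace (r * Im z + 0 * Re z) with (r * Im z) by ring.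
  rewrite !Rabs_mult, Rabs_right by lra. ring.
Qed.

Lemma n1_zero z : n1 z <= 0 -> z = C0.
Proof.
  unfold n1; intro H. pose proof (Rabs_pos (Re z)); pose proof (Rabs_pos (Im z)).
  apply Ceq; simpl; apply Rabs_eq_0; lra.
Qed.

Lemma masked_bound (A : nat -> Cplx) (x : nat -> R) N K c :
  (forall k, n1 (A k) <= c * (if Nat.leb N k then x k else 0)) ->
  n1 (Csumn A K) <= c * sum_f_R0 (fun k => if Nat.leb N k then x k else 0) K.
Proof.
  intro H. eapply Rle_trans; [apply n1_Csumn|].
  assert (E : forall K, c * sum_f_R0 (fun k => if Nat.leb N k then x k else 0) K =
     sum_f_R0 (fun k => c * (if Nat.leb N k then x k else 0)) K)
    by (intro K0; induction K0; simpl; [ring| rewrite <- IHK0; ring]).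
  rewrite E. apply sum_Rle; intros. apply H.
Qed.

Lemma PS_uniq_coef a b f g : PS a f -> PS b g ->
  (forall l, onS1 l -> f l = g (Cconj l)) -> forall m, (1 <= m)%nat -> a m = C0.
Proof.
  intros [Ha Hf] [Hb Hg] Hfg m Hm.
  apply n1_zero. apply Rnot_lt_le; intro Hpos.
  set (eps := n1 (a m)).
  assert (He8 : 0 < eps / 8) by (unfold eps; lra).
  destruct (tail_small _ (fun k => n1_ge0 (a k)) Ha (eps / 8) He8) as [Na HNa].
  destruct (tail_small _ (fun k => n1_ge0 (b k)) Hb (eps / 8) He8) as [Nb HNb].
  set (N := (Na + Nb + m + 1)%nat).
  assert (HN1 : (1 <= N)%nat) by lia.
  assert (HNr : 0 < INR N) by (apply lt_0_INR; lia).
  set (E := Csumn (fun j => Cmul (Cpow (Cconj (zeta N j)) m) (f (zeta N j))) (N - 1)).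
  assert (Ca : Ccv (fun K => Csumn (fun k => Cmul (a k) (dsum N (INR k - INR m))) K) E).
  { unfold E. eapply Ccv_ext; [|apply (Ccv_sum (fun j K => Cmul (Cpow (Cconj (zeta N j)) m)
          (Csumn (fun k => Cmul (a k) (Cpow (zeta N j) k)) K)))].
    - intro K. simpl. rewrite (Csumn_ext _ (fun j => Csumn (fun k =>
          Cmul (a k) (Cexpi (INR j * (2 * PI * (INR k - INR m) / INR N)))) K)).
      + rewrite Csumn_exchange. apply Csumn_ext. intros k _. unfold dsum. rewrite Csumn_mul_l. reflexivity.
      + intros j _. rewrite <- Csumn_mul_l. apply Csumn_ext. intros k _.
        rewrite <- phase_a by auto. Cring.
    - intros j _. apply Ccv_scal. apply Ccv_series. apply Hf. apply onS1_expi. }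
  assert (Ba : n1 (Cadd E (Copp (Cmul (mkC (INR N) 0) (a m)))) <= 2 * INR N * (eps / 8)).
  { apply (Ccv_n1_bound _ _ _ m _ Ca). intros K HK.
    rewrite (Csumn_ext _ (fun k => Cadd (if Nat.eqb k m then Cmul (mkC (INR N) 0) (a m) else C0)
       (if Nat.leb N k then Cmul (a k) (dsum N (INR k - INR m)) else C0))).
    - rewrite Csumn_add. rewrite (Csumn_single _ m) by (auto; intros k _ Hk; apply Nat.eqb_neq in Hk; rewrite Hk; reflexivity).
      rewrite Nat.eqb_refl.
      replace (Cadd (Cadd (Cmul (mkC (INR N) 0) (a m)) (Csumn (fun k => if Nat.leb N k then Cmul (a k) (dsum N (INR k - INR m)) else C0) K)) (Copp (Cmul (mkC (INR N) 0) (a m))))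
        with (Csumn (fun k => if Nat.leb N k then Cmul (a k) (dsum N (INR k - INR m)) else C0) K) by Cring.
      eapply Rle_trans; [apply (masked_bound _ (fun k => n1 (a k)) N K (2 * INR N))|].
      + intro k. destruct (Nat.leb N k).
        * eapply Rle_trans; [apply n1_mul|]. pose proof (n1_dsum N (INR k - INR m) HN1).
          pose proof (n1_ge0 (a k)). nra.
        * unfold n1; simpl; rewrite Rabs_R0; lra.
      + apply Rmult_le_compat_l; [lra|]. apply HNa; lia.
    - intros k _. destruct (Nat.eqb k m) eqn:Ekm; destruct (Nat.leb N k) eqn:ENk.
      + apply Nat.eqb_eq in Ekm; apply Nat.leb_le in ENk; lia.
      + apply Nat.eqb_eq in Ekm; subst k. rewrite Rminus_diag, dsum_m by auto. Cring.
      + Cring.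
      + apply Nat.eqb_neq in Ekm; apply Nat.leb_gt in ENk.
        assert (Hr : 0 < Rabs (INR k - INR m) < INR N).
        { assert (INR k < INR N) by (apply lt_INR; lia). assert (INR m < INR N) by (apply lt_INR; lia).
          pose proof (pos_INR m); pose proof (pos_INR k). split.
          - apply Rabs_pos_lt; intro E0; apply Ekm; apply INR_eq; lra.
          - apply Rabs_def1; lra. }
        rewrite dsum_zero by auto.
        Cring. }
  assert (Cb : Ccv (fun K => Csumn (fun k => Cmul (b k) (dsum N (INR 0 - INR (k + m)))) K) E).
  { unfold E. eapply Ccv_ext; [|apply (Ccv_sum (fun j K => Cmul (Cpow (Cconj (zeta N j)) m)
          (Csumn (fun k => Cmul (b k) (Cpow (Cconj (zeta N j)) k)) K)))].
    - intro K. simpl. rewrite (Csumn_ext _ (fun j => Csumn (fun k =>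
          Cmul (b k) (Cexpi (INR j * (2 * PI * (INR 0 - INR (k + m)) / INR N)))) K)).
      + rewrite Csumn_exchange. apply Csumn_ext. intros k _. unfold dsum. rewrite Csumn_mul_l. reflexivity.
      + intros j _. rewrite <- Csumn_mul_l. apply Csumn_ext. intros k _.
        rewrite <- phase_b by auto. Cring.
    - intros j _. apply Ccv_scal. rewrite Hfg by apply onS1_expi. apply Ccv_series. apply Hg.
      unfold zeta. rewrite Cconj_expi. apply onS1_expi. }
  assert (Bb : n1 (Cadd E (Copp C0)) <= 2 * INR N * (eps / 8)).
  { apply (Ccv_n1_bound _ _ _ 0 _ Cb). intros K _.
    replace (Cadd (Csumn (fun k => Cmul (b k) (dsum N (INR 0 - INR (k + m)))) K) (Copp C0))
      with (Csumn (fun k => Cmul (b k) (dsum N (INR 0 - INR (k + m)))) K) by Cring.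
    eapply Rle_trans; [apply (masked_bound _ (fun k => n1 (b k)) (N - m) K (2 * INR N))|].
    + intro k. destruct (Nat.leb (N - m) k) eqn:Ek.
      * eapply Rle_trans; [apply n1_mul|]. pose proof (n1_dsum N (INR 0 - INR (k + m)) HN1).
        pose proof (n1_ge0 (b k)). nra.
      * apply Nat.leb_gt in Ek.
        assert (Hr : 0 < Rabs (INR 0 - INR (k + m)) < INR N).
        { assert (INR (k + m) < INR N) by (apply lt_INR; lia). assert (0 < INR m) by (apply lt_0_INR; lia).
          rewrite plus_INR in *. pose proof (pos_INR k). simpl.
          rewrite Rabs_left by lra. split; lra. }
        rewrite dsum_zero by auto.
        unfold n1; simpl. rewrite !Rmult_0_r, Rminus_0_r, Rplus_0_r, Rabs_R0. lra.
    + apply Rmult_le_compat_l; [lra|]. apply HNb; lia. }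
  assert (Hn : n1 (Cmul (mkC (INR N) 0) (a m)) <= INR N * eps / 4 + INR N * eps / 4).
  { replace (Cmul (mkC (INR N) 0) (a m)) with
      (Cadd (Copp (Cadd E (Copp (Cmul (mkC (INR N) 0) (a m))))) (Cadd E (Copp C0))) by Cring.
    eapply Rle_trans; [apply n1_add|]. rewrite n1_opp. lra. }
  rewrite n1_realmul in Hn by lra. unfold eps in *. nra.
Qed.
Lemma PS_uniq a b f g : PS a f -> PS b g ->
  (forall l, onS1 l -> f l = g (Cconj l)) -> forall l, onS1 l -> f l = a 0%nat.
Proof.
  intros Hf Hg H l Hl.
  pose proof (PS_uniq_coef _ _ _ _ Hf Hg H) as Z.
  destruct Hf as [_ Hf]. apply (Cseries_unique _ _ _ (Hf l Hl)).
  apply (Cseries_finite _ 0).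
  - intros k Hk. rewrite Z by lia. Cring.
  - apply Ceq; simpl; ring.
Qed.

Ltac Mring := apply Meq; simpl; Cring.

Definition Madj (M : M2) : M2 := mkM2 (a22 M) (Copp (a12 M)) (Copp (a21 M)) (a11 M).

Lemma Mmul_assoc A B C : Mmul (Mmul A B) C = Mmul A (Mmul B C).
Proof. Mring. Qed.
Lemma Mmul_adj_r M : Mmul M (Madj M) = Mscal (Mdet M) Mid.
Proof. Mring. Qed.
Lemma Mmul_adj_l M : Mmul (Madj M) M = Mscal (Mdet M) Mid.
Proof. Mring. Qed.
Lemma Mscal_C1 M : Mscal C1 M = M.
Proof. Mring. Qed.
Lemma Mmul_id_l M : Mmul Mid M = M.
Proof. Mring. Qed.
Lemma Mmul_id_r M : Mmul M Mid = M.
Proof. Mring. Qed.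
Lemma Madj_id : Madj Mid = Mid.
Proof. Mring. Qed.
Lemma Madj_mul A B : Madj (Mmul A B) = Mmul (Madj B) (Madj A).
Proof. Mring. Qed.
Lemma Mdet_mul A B : Mdet (Mmul A B) = Cmul (Mdet A) (Mdet B).
Proof. unfold Mdet; simpl. Cring. Qed.
Lemma Cinv_C1 : Cinv C1 = C1.
Proof. apply Ceq; unfold Cinv, Cnorm2; simpl; field. Qed.
Lemma Minv_det1 M : Mdet M = C1 -> Minv M = Madj M.
Proof. intro H. unfold Minv. rewrite H, Cinv_C1. Mring. Qed.
Lemma Cconj_conj l : Cconj (Cconj l) = l.
Proof. Cring. Qed.
Lemma onS1_conj l : onS1 l -> onS1 (Cconj l).
Proof. unfold onS1, Cnorm2; simpl. intro; nra. Qed.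

Lemma adj_mul_id M : Mdet M = C1 -> Mmul (Madj M) M = Mid.
Proof. intro H; rewrite Mmul_adj_l, H, Mscal_C1; reflexivity. Qed.
Lemma mul_adj_id M : Mdet M = C1 -> Mmul M (Madj M) = Mid.
Proof. intro H; rewrite Mmul_adj_r, H, Mscal_C1; reflexivity. Qed.

Definition MPS (A : nat -> M2) (F : Cplx -> M2) : Prop :=
  PS (fun k => a11 (A k)) (fun l => a11 (F l)) /\
  PS (fun k => a12 (A k)) (fun l => a12 (F l)) /\
  PS (fun k => a21 (A k)) (fun l => a21 (F l)) /\
  PS (fun k => a22 (A k)) (fun l => a22 (F l)).

Definition mconv (A B : nat -> M2) (n : nat) : M2 :=
  mkM2 (Cadd (conv (fun k => a11 (A k)) (fun k => a11 (B k)) n) (conv (fun k => a12 (A k)) (fun k => a21 (B k)) n))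
       (Cadd (conv (fun k => a11 (A k)) (fun k => a12 (B k)) n) (conv (fun k => a12 (A k)) (fun k => a22 (B k)) n))
       (Cadd (conv (fun k => a21 (A k)) (fun k => a11 (B k)) n) (conv (fun k => a22 (A k)) (fun k => a21 (B k)) n))
       (Cadd (conv (fun k => a21 (A k)) (fun k => a12 (B k)) n) (conv (fun k => a22 (A k)) (fun k => a22 (B k)) n)).

Lemma mconv0 A B : mconv A B 0 = Mmul (A 0%nat) (B 0%nat).
Proof. unfold mconv, conv. Mring. Qed.

Lemma MPS_mul A B F G : MPS A F -> MPS B G -> MPS (mconv A B) (fun l => Mmul (F l) (G l)).
Proof.
  intros (H1 & H2 & H3 & H4) (G1 & G2 & G3 & G4).
  split; [|split; [|split]]; simpl; apply PS_add; apply PS_mul; auto.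
Qed.

Lemma PS_opp a f : PS a f -> PS (fun k => Copp (a k)) (fun l => Copp (f l)).
Proof.
  intro H. apply (PS_scal (Copp C1)) in H.
  eapply PS_coef; [eapply PS_fun; [exact H|]|]; intros; Cring.
Qed.

Lemma MPS_adj A F : MPS A F -> MPS (fun k => Madj (A k)) (fun l => Madj (F l)).
Proof.
  intros (H1 & H2 & H3 & H4). split; [|split; [|split]]; simpl; auto; apply PS_opp; auto.
Qed.

Lemma MPS_scal c A F : MPS A F -> MPS (fun k => Mscal c (A k)) (fun l => Mscal c (F l)).
Proof.
  intros (H1 & H2 & H3 & H4). split; [|split; [|split]]; simpl; apply PS_scal; auto.
Qed.

Lemma MPS_fun A F G : MPS A F -> (forall l, onS1 l -> F l = G l) -> MPS A G.
Proof.
  intros (H1 & H2 & H3 & H4) E. split; [|split; [|split]]; (eapply PS_fun; [eassumption|]); intros l Hl; cbv beta; rewrite E; auto.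
Qed.

Definition mccoef (M : M2) (k : nat) : M2 :=
  mkM2 (ccoef (a11 M) k) (ccoef (a12 M) k) (ccoef (a21 M) k) (ccoef (a22 M) k).

Lemma MPS_const M : MPS (mccoef M) (fun _ => M).
Proof. split; [|split; [|split]]; simpl; apply PS_const. Qed.

Lemma mccoef0 M : mccoef M 0 = M.
Proof. destruct M; reflexivity. Qed.

Lemma MPS_uniq A B F G : MPS A F -> MPS B G ->
  (forall l, onS1 l -> F l = G (Cconj l)) -> forall l, onS1 l -> F l = A 0%nat.
Proof.
  intros (H1 & H2 & H3 & H4) (G1 & G2 & G3 & G4) E l Hl.
  apply Meq.
  - apply (PS_uniq _ _ _ _ H1 G1); auto. intros; cbv beta; rewrite E; auto.
  - apply (PS_uniq _ _ _ _ H2 G2); auto. intros; cbv beta; rewrite E; auto.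
  - apply (PS_uniq _ _ _ _ H3 G3); auto. intros; cbv beta; rewrite E; auto.
  - apply (PS_uniq _ _ _ _ H4 G4); auto. intros; cbv beta; rewrite E; auto.
Qed.

Definition Pside (P : Cplx -> M2) : Prop := exists A, MPS A P /\ A 0%nat = Mid.
Definition Pany (P : Cplx -> M2) : Prop := exists A, MPS A P.
Definition Nside (Q : Cplx -> M2) : Prop := Pany (fun l => Q (Cconj l)).
Definition NsideI (Q : Cplx -> M2) : Prop := Pside (fun l => Q (Cconj l)).

Lemma Pside_any P : Pside P -> Pany P.
Proof. intros [A [H _]]; exists A; auto. Qed.

Lemma Pany_mul P Q : Pany P -> Pany Q -> Pany (fun l => Mmul (P l) (Q l)).
Proof. intros [A HA] [B HB]; exists (mconv A B); apply MPS_mul; auto. Qed.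

Lemma Pside_mul P Q : Pside P -> Pside Q -> Pside (fun l => Mmul (P l) (Q l)).
Proof.
  intros [A [HA EA]] [B [HB EB]]; exists (mconv A B); split; [apply MPS_mul; auto|].
  rewrite mconv0, EA, EB. apply Mmul_id_l.
Qed.

Lemma Pany_adj P : Pany P -> Pany (fun l => Madj (P l)).
Proof. intros [A HA]; exists (fun k => Madj (A k)); apply MPS_adj; auto. Qed.

Lemma Pside_adj P : Pside P -> Pside (fun l => Madj (P l)).
Proof.
  intros [A [HA EA]]; exists (fun k => Madj (A k)); split; [apply MPS_adj; auto|].
  simpl. rewrite EA. apply Madj_id.
Qed.

Lemma Pany_const M : Pany (fun _ => M).
Proof. exists (mccoef M); apply MPS_const. Qed.

Lemma Pside_id : Pside (fun _ => Mid).
Proof. exists (mccoef Mid); split; [apply MPS_const| apply mccoef0]. Qed.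

Lemma Pany_fun P Q : Pany P -> (forall l, onS1 l -> P l = Q l) -> Pany Q.
Proof. intros [A HA] E; exists A; eapply MPS_fun; eauto. Qed.

Lemma Pside_fun P Q : Pside P -> (forall l, onS1 l -> P l = Q l) -> Pside Q.
Proof. intros [A [HA E0]] E; exists A; split; auto; eapply MPS_fun; eauto. Qed.

Lemma Nside_fun Q Q' : Nside Q -> (forall l, onS1 l -> Q l = Q' l) -> Nside Q'.
Proof.
  intros H E. eapply Pany_fun; [exact H|]. intros l Hl; apply E, onS1_conj; auto.
Qed.

Lemma NsideI_fun Q Q' : NsideI Q -> (forall l, onS1 l -> Q l = Q' l) -> NsideI Q'.
Proof.
  intros H E. eapply Pside_fun; [exact H|]. intros l Hl; apply E, onS1_conj; auto.
Qed.

Lemma birkhoff P1 P2 Q1 Q2 :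
  Pside P1 -> Pside P2 -> Nside Q1 -> Nside Q2 ->
  (forall l, onS1 l -> Mdet (P2 l) = C1) -> (forall l, onS1 l -> Mdet (Q1 l) = C1) ->
  (forall l, onS1 l -> Mmul (P1 l) (Q1 l) = Mmul (P2 l) (Q2 l)) ->
  forall l, onS1 l -> P1 l = P2 l /\ Q1 l = Q2 l.
Proof.
  intros HP1 HP2 HQ1 HQ2 D2 D1 E.
  destruct (Pside_mul _ _ (Pside_adj _ HP2) HP1) as [A [HA EA]].
  destruct (Pany_mul _ _ HQ2 (Pany_adj _ HQ1)) as [B HB].
  assert (U : forall l, onS1 l -> Mmul (Madj (P2 l)) (P1 l) = Mid).
  { intros l Hl. rewrite <- EA. apply (MPS_uniq _ _ _ _ HA HB); auto.
    intros l' Hl'. rewrite Cconj_conj.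
    transitivity (Mmul (Mmul (Madj (P2 l')) (Mmul (P1 l') (Q1 l'))) (Madj (Q1 l'))).
    - rewrite <- !Mmul_assoc, (Mmul_assoc _ (Q1 l')), mul_adj_id by auto. symmetry; apply Mmul_id_r.
    - rewrite E by auto. rewrite <- Mmul_assoc, adj_mul_id by auto. rewrite Mmul_id_l. reflexivity. }
  intros l Hl.
  assert (EP : P1 l = P2 l).
  { transitivity (Mmul (Mmul (P2 l) (Madj (P2 l))) (P1 l)).
    - rewrite mul_adj_id by auto. symmetry; apply Mmul_id_l.
    - rewrite Mmul_assoc, U by auto. apply Mmul_id_r. }
  split; auto.
  assert (D1' : Mdet (P1 l) = C1) by (rewrite EP; auto).
  transitivity (Mmul (Mmul (Madj (P1 l)) (P1 l)) (Q1 l)); [rewrite adj_mul_id by auto; symmetry; apply Mmul_id_l|].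
  rewrite Mmul_assoc, E by auto. rewrite <- EP, <- Mmul_assoc, adj_mul_id by auto. apply Mmul_id_l.
Qed.
Lemma Rabs_le_inv x y : Rabs x <= y -> - y <= x <= y.
Proof. intro H. destruct (Rcase_abs x); [rewrite Rabs_left in H|rewrite Rabs_right in H]; lra. Qed.

Lemma Cnorm_ge_abs z : Rabs (Re z) <= Cnorm z.
Proof.
  unfold Cnorm, Cnorm2. rewrite <- sqrt_Rsqr_abs. apply sqrt_le_1_alt. unfold Rsqr. nra.
Qed.

Lemma Cnorm_sq z : Cnorm z * Cnorm z = Re z * Re z + Im z * Im z.
Proof. unfold Cnorm, Cnorm2. apply sqrt_sqrt. nra. Qed.

Lemma Csqrt_sq z : Cmul (Csqrt z) (Csqrt z) = z.
Proof.
  pose proof (Cnorm_ge_abs z) as Hb. pose proof (Cnorm_sq z) as Hs.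
  pose proof (Rabs_pos (Re z)).
  assert (H1 : 0 <= (Cnorm z + Re z) / 2) by (apply Rabs_le_inv in Hb; lra).
  assert (H2 : 0 <= (Cnorm z - Re z) / 2) by (apply Rabs_le_inv in Hb; lra).
  apply Ceq; unfold Csqrt; simpl.
  - assert (E1 := sqrt_sqrt _ H1). assert (E2 := sqrt_sqrt _ H2).
    destruct (Rlt_dec (Im z) 0); nra.
  - assert (E : sqrt ((Cnorm z + Re z) / 2) * sqrt ((Cnorm z - Re z) / 2) = Rabs (Im z) / 2).
    { rewrite <- sqrt_mult by auto.
      replace ((Cnorm z + Re z) / 2 * ((Cnorm z - Re z) / 2)) with (Rsqr (Im z / 2))
        by (unfold Rsqr; nra).
      rewrite sqrt_Rsqr_abs. unfold Rdiv. rewrite Rabs_mult, (Rabs_right (/2)) by lra. reflexivity. }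
    destruct (Rlt_dec (Im z) 0).
    + rewrite Rabs_left in E by auto. nra.
    + rewrite Rabs_right in E by lra. nra.
Qed.

Lemma Csqrt_Re_pos z : 0 < Re z -> 0 < Re (Csqrt z).
Proof.
  intro H. unfold Csqrt; simpl. apply sqrt_lt_R0.
  pose proof (Cnorm_ge_abs z). apply Rabs_le_inv in H0. lra.
Qed.

Lemma Csqrt_Re_nonneg z : 0 <= Re (Csqrt z).
Proof. unfold Csqrt; simpl. apply sqrt_pos. Qed.

Lemma sqrt_unique s z : Cmul s s = z -> 0 < Re s -> s = Csqrt z.
Proof.
  intros H Hs. set (t := Csqrt z).
  assert (Ht : Cmul t t = z) by apply Csqrt_sq.
  assert (Hr : 0 <= Re t) by apply Csqrt_Re_nonneg.
  clearbody t.
  assert (E : Cmul (Cadd s (Copp t)) (Cadd s t) = C0).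
  { transitivity (Cadd (Cmul s s) (Copp (Cmul t t))); [Cring|]. rewrite H, Ht. Cring. }
  assert (D : Cadd s t <> C0).
  { intro E0. assert (Re (Cadd s t) = 0) by (rewrite E0; reflexivity). simpl in H0. lra. }
  pose proof (Cmul_reg _ _ E D) as Z.
  apply Ceq; [assert (Re (Cadd s (Copp t)) = 0) by (rewrite Z; reflexivity)
            | assert (Im (Cadd s (Copp t)) = 0) by (rewrite Z; reflexivity)]; simpl in *; lra.
Qed.

Lemma Cinv_unique z x : Cmul z x = C1 -> x = Cinv z.
Proof.
  intro H. assert (Hz : Cnorm2 z <> 0).
  { intro E. unfold Cnorm2 in E. assert (Re z = 0 /\ Im z = 0) as [E1 E2] by (split; nra).
    assert (Re (Cmul z x) = 1) by (rewrite H; reflexivity). simpl in H0. rewrite E1, E2 in H0. lra. }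
  destruct z as [a b], x as [c d]. unfold Cnorm2 in Hz; simpl in Hz.
  assert (Re (Cmul (mkC a b) (mkC c d)) = 1) by (rewrite H; reflexivity).
  assert (Im (Cmul (mkC a b) (mkC c d)) = 0) by (rewrite H; reflexivity).
  simpl in *. apply Ceq; unfold Cinv, Cnorm2; simpl.
  - assert (Ec : a = c * (a * a + b * b)).
    { transitivity (a * (a * c - b * d) + b * (a * d + b * c)); [rewrite H0, H1; ring| ring]. }
    rewrite Ec at 1. field; auto.
  - assert (Ed : - b = d * (a * a + b * b)).
    { transitivity (- b * (a * c - b * d) + a * (a * d + b * c)); [rewrite H0, H1; ring| ring]. }
    rewrite Ed. field; auto.
Qed.

(* ---------- binomial coefficients of (1+w)^(1/2) ---------- *)
Fixpoint sb (k : nat) : R :=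
  match k with O => 1 | S j => sb j * (/2 - INR j) / INR (S j) end.

Lemma sb_rec j : INR (S j) * sb (S j) = (/2 - INR j) * sb j.
Proof. change (sb (S j)) with (sb j * (/2 - INR j) / INR (S j)). field. apply not_0_INR; lia. Qed.

Lemma sb_abs_sum k : (1 <= k)%nat ->
  sum_f_R0 (fun j => Rabs (sb j)) k = 2 - (2 * INR k - 1) * Rabs (sb k).
Proof.
  intro Hk. induction k; [lia|].
  destruct k.
  - simpl. rewrite Rmult_1_l, Rabs_R1. replace (1 * (/ 2 - 0) / 1) with (/2) by field.
    rewrite Rabs_right by lra. lra.
  - rewrite tech5. rewrite IHk by lia.
    assert (E : Rabs (sb (S (S k))) = Rabs (sb (S k)) * ((INR (S k) - /2) / INR (S (S k)))).
    { change (sb (S (S k))) with (sb (S k) * (/2 - INR (S k)) / INR (S (S k))).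
      unfold Rdiv. rewrite (Rabs_mult (sb (S k) * _)), (Rabs_mult (sb (S k))).
      rewrite (Rabs_left (/2 - _)) by (rewrite S_INR; pose proof (pos_INR k); lra).
      rewrite (Rabs_right (/ _)) by (apply Rle_ge, Rlt_le, Rinv_0_lt_compat, lt_0_INR; lia).
      ring. }
    rewrite E. rewrite !S_INR. field. rewrite <- !S_INR. apply not_0_INR; lia.
Qed.

Lemma sb_abs_partial n : sum_f_R0 (fun j => Rabs (sb j)) n <= 2.
Proof.
  destruct n.
  - simpl. rewrite Rabs_R1. lra.
  - rewrite sb_abs_sum by lia. pose proof (Rabs_pos (sb (S n))).
    assert (1 <= INR (S n)) by (apply (le_INR 1); lia). nra.
Qed.

Lemma sb_abs_le k : Rabs (sb k) <= 2.
Proof.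
  destruct k.
  - simpl; rewrite Rabs_R1; lra.
  - pose proof (sb_abs_partial (S k)). rewrite tech5 in H.
    assert (0 <= sum_f_R0 (fun j => Rabs (sb j)) k).
    { apply cond_pos_sum. intro; apply Rabs_pos. }
    lra.
Qed.

Lemma sum_reflect (f : nat -> R) n : sum_f_R0 f n = sum_f_R0 (fun j => f (n - j)%nat) n.
Proof.
  induction n.
  - reflexivity.
  - rewrite tech5. rewrite (decomp_sum (fun j => f (S n - j)%nat) (S n)) by lia.
    simpl pred. replace (S n - 0)%nat with (S n) by lia.
    rewrite IHn. rewrite Rplus_comm. reflexivity.
Qed.

Definition tb (k : nat) : R := sum_f_R0 (fun j => sb j * sb (k - j)%nat) k.

Lemma tb_rec k : INR (S k) * tb (S k) = (1 - INR k) * tb k.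
Proof.
  assert (H1 : INR (S k) * tb (S k) = 2 * sum_f_R0 (fun j => INR j * sb j * sb (S k - j)%nat) (S k)).
  { unfold tb.
    assert (Ha : INR (S k) * sum_f_R0 (fun j => sb j * sb (S k - j)%nat) (S k) =
      sum_f_R0 (fun j => INR j * sb j * sb (S k - j)%nat) (S k) +
      sum_f_R0 (fun j => INR (S k - j)%nat * sb j * sb (S k - j)%nat) (S k)).
    { rewrite <- plus_sum. rewrite scal_sum. apply sum_eq. intros i Hi.
      rewrite minus_INR by auto. ring. }
    rewrite Ha. rewrite (sum_reflect (fun j => INR (S k - j)%nat * sb j * sb (S k - j)%nat)).
    assert (Hb : sum_f_R0 (fun j => INR (S k - (S k - j))%nat * sb (S k - j)%nat * sb (S k - (S k - j))%nat) (S k)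
       = sum_f_R0 (fun j => INR j * sb j * sb (S k - j)%nat) (S k)).
    { apply sum_eq. intros i Hi. replace (S k - (S k - i))%nat with i by lia. ring. }
    rewrite Hb. ring. }
  assert (H2 : sum_f_R0 (fun j => INR j * sb j * sb (S k - j)%nat) (S k) =
               sum_f_R0 (fun i => (/2 - INR i) * sb i * sb (k - i)%nat) k).
  { rewrite decomp_sum by lia. simpl pred. simpl INR at 1. rewrite Rmult_0_l, Rmult_0_l, Rplus_0_l.
    apply sum_eq. intros i Hi. rewrite <- (sb_rec i). replace (S k - S i)%nat with (k - i)%nat by lia. ring. }
  assert (H3 : 2 * sum_f_R0 (fun i => INR i * sb i * sb (k - i)%nat) k = INR k * tb k).
  { unfold tb.
    assert (Ha : INR k * sum_f_R0 (fun j => sb j * sb (k - j)%nat) k =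
      sum_f_R0 (fun j => INR j * sb j * sb (k - j)%nat) k +
      sum_f_R0 (fun j => INR (k - j)%nat * sb j * sb (k - j)%nat) k).
    { rewrite <- plus_sum. rewrite scal_sum. apply sum_eq. intros i Hi.
      rewrite minus_INR by auto. ring. }
    rewrite Ha. rewrite (sum_reflect (fun j => INR (k - j)%nat * sb j * sb (k - j)%nat)).
    assert (Hb : sum_f_R0 (fun j => INR (k - (k - j))%nat * sb (k - j)%nat * sb (k - (k - j))%nat) k
       = sum_f_R0 (fun j => INR j * sb j * sb (k - j)%nat) k).
    { apply sum_eq. intros i Hi. replace (k - (k - i))%nat with i by lia. ring. }
    rewrite Hb. ring. }
  rewrite H1, H2.
  assert (H4 : sum_f_R0 (fun i => (/2 - INR i) * sb i * sb (k - i)%nat) k =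
     /2 * tb k - sum_f_R0 (fun i => INR i * sb i * sb (k - i)%nat) k).
  { unfold tb. rewrite scal_sum. rewrite <- minus_sum. apply sum_eq; intros; ring. }
  rewrite H4. lra.
Qed.

Lemma tb_0 : tb 0 = 1.
Proof. unfold tb; simpl; ring. Qed.
Lemma tb_1 : tb 1 = 1.
Proof. unfold tb; simpl. field. Qed.
Lemma tb_ge2 k : (2 <= k)%nat -> tb k = 0.
Proof.
  intro H. induction k; [lia|].
  destruct (Nat.eq_dec k 1).
  - subst. pose proof (tb_rec 1). rewrite tb_1 in H0. simpl in H0.
    assert (INR 2 <> 0) by (apply not_0_INR; lia). simpl in H1.
    apply (Rmult_eq_reg_l (1 + 1)); [lra|]. lra.
  - pose proof (tb_rec k). rewrite IHk in H0 by lia.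
    apply (Rmult_eq_reg_l (INR (S k))); [|apply not_0_INR; lia]. lra.
Qed.
Lemma CAbs_ex A : CAbs A -> exists a, Cseries_cv A a.
Proof.
  intro H.
  pose proof (Series_correct _ (ex_series_Rabs _ (CAbs_Re _ H))) as H1.
  pose proof (Series_correct _ (ex_series_Rabs _ (CAbs_Im _ H))) as H2.
  exists (mkC (Series (fun k => Re (A k))) (Series (fun k => Im (A k)))).
  split; simpl; apply Un_cv_is_series; auto.
Qed.

Lemma Cnorm2_pow_gen w k : Cnorm2 (Cpow w k) = (Cnorm2 w) ^ k.
Proof. induction k; simpl; [unfold Cnorm2; simpl; ring| rewrite Cnorm2_mul, IHk; ring]. Qed.

Lemma pow_part_bound w kap k : 0 <= kap -> Cnorm2 w = kap * kap ->
  Rabs (Re (Cpow w k)) <= kap ^ k /\ Rabs (Im (Cpow w k)) <= kap ^ k.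
Proof.
  intros Hk Hw. pose proof (Cnorm2_pow_gen w k) as E. rewrite Hw in E.
  replace ((kap * kap) ^ k) with (kap ^ k * kap ^ k) in E by (rewrite Rpow_mult_distr; reflexivity).
  unfold Cnorm2 in E.
  pose proof (pow_le kap k Hk).
  split; apply Rabs_le; split; nra.
Qed.

Lemma n1_pow_bound w kap k : 0 <= kap -> Cnorm2 w = kap * kap -> n1 (Cpow w k) <= 2 * kap ^ k.
Proof. intros H1 H2. destruct (pow_part_bound w kap k H1 H2). unfold n1; lra. Qed.

Lemma ex_series_geom2 kap c : 0 <= kap < 1 -> ex_series (fun k => c * kap ^ k).
Proof.
  intro H. apply ex_series_R_scal. apply ex_series_geom. rewrite Rabs_right; lra.
Qed.

Lemma CAbs_geomlike (A : nat -> Cplx) kap c : 0 <= kap < 1 -> (forall k, n1 (A k) <= c * kap ^ k) -> CAbs A.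
Proof.
  intros Hk H. unfold CAbs. apply (ex_series_R_le _ (fun k => c * kap ^ k)).
  - intro k; split; [apply n1_ge0| apply H].
  - apply ex_series_geom2; auto.
Qed.

Lemma n1_RtoC_mul r z : n1 (Cmul (RtoC r) z) = Rabs r * n1 z.
Proof.
  unfold n1, RtoC, Cmul; simpl.
  replace (r * Re z - 0 * Im z) with (r * Re z) by ring.
  replace (r * Im z + 0 * Re z) with (r * Im z) by ring.
  rewrite !Rabs_mult. ring.
Qed.

Lemma Csumn_RtoC (f : nat -> R) n : Csumn (fun k => RtoC (f k)) n = RtoC (sum_f_R0 f n).
Proof. apply Ceq; simpl; [reflexivity| apply sum_eq_R0; auto]. Qed.

Lemma Un_cv_ge u l N B : Un_cv u l -> (forall n, (N <= n)%nat -> B <= u n) -> B <= l.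
Proof.
  intros H HB. destruct (Rle_or_lt B l); auto.
  destruct (H (B - l) ltac:(lra)) as [N1 HN1].
  specialize (HN1 (max N N1) ltac:(lia)). specialize (HB (max N N1) ltac:(lia)).
  unfold Rdist in HN1. apply Rabs_def2 in HN1. lra.
Qed.

Lemma Cmul_inv_r z : z <> C0 -> Cmul z (Cinv z) = C1.
Proof.
  intro H. assert (Hn : Cnorm2 z <> 0).
  { intro E. apply H. unfold Cnorm2 in E. apply Ceq; simpl; nra. }
  destruct z as [a b]. unfold Cnorm2 in Hn; simpl in Hn.
  apply Ceq; unfold Cinv, Cnorm2; simpl; field; auto.
Qed.

Lemma pow_le_one x n : 0 <= x -> x <= 1 -> x ^ n <= 1.
Proof. intros H1 H2. induction n; simpl; [lra|]. pose proof (pow_le x n H1). nra. Qed.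

Section Sqrt_series.
Variable kap : R.
Hypothesis Hkap : 0 <= kap < 1.
Variable w : Cplx.
Hypothesis Hw : Cnorm2 w = kap * kap.

Definition Sterm (k : nat) : Cplx := Cmul (RtoC (sb k)) (Cpow w k).

Lemma CAbs_Sterm : CAbs Sterm.
Proof.
  apply (CAbs_geomlike _ kap 4); auto. intro k. unfold Sterm.
  rewrite n1_RtoC_mul. pose proof (sb_abs_le k). pose proof (n1_pow_bound w kap k ltac:(lra) Hw).
  pose proof (Rabs_pos (sb k)). pose proof (n1_ge0 (Cpow w k)). nra.
Qed.

Lemma Re_w_bound : - kap <= Re w.
Proof.
  destruct (pow_part_bound w kap 1 ltac:(lra) Hw) as [H _]. simpl in H.
  replace (Cmul w C1) with w in H by Cring. rewrite Rmult_1_r in H. apply Rabs_le_inv in H. lra.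
Qed.

Lemma S_square Sv : Cseries_cv Sterm Sv -> Cmul Sv Sv = Cadd C1 w.
Proof.
  intro HS. pose proof (Cseries_mult _ _ _ _ HS HS CAbs_Sterm CAbs_Sterm) as H.
  apply (Cseries_unique _ _ _ H).
  apply (Cseries_finite _ 1).
  - intros n Hn. transitivity (Cmul (RtoC (tb n)) (Cpow w n)).
    + unfold tb. rewrite <- Csumn_RtoC, <- Csumn_mul_r. apply Csumn_ext. intros k Hk.
      unfold Sterm. replace (Cpow w n) with (Cpow w (k + (n - k))) by (f_equal; lia).
      rewrite Cpow_add. Cring.
    + rewrite tb_ge2 by lia. Cring.
  - apply Ceq; unfold Sterm; simpl; field.
Qed.

Lemma S_Re_pos Sv : Cseries_cv Sterm Sv -> 1 - kap <= Re Sv.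
Proof.
  intros [H1 _].
  assert (B : forall n, 1 + kap - kap * sum_f_R0 (fun j => Rabs (sb j)) n <=
                        sum_f_R0 (fun k => Re (Sterm k)) n).
  { induction n.
    - unfold Sterm; simpl. rewrite Rabs_R1. lra.
    - rewrite !tech5.
      assert (ES : Re (Sterm (S n)) = sb (S n) * Re (Cpow w (S n)))
        by (unfold Sterm, Cmul, RtoC; cbn [Re Im]; ring).
      rewrite ES.
      destruct (pow_part_bound w kap (S n) ltac:(lra) Hw) as [Hr Hi].
      assert (kap ^ S n <= kap).
      { simpl. pose proof (pow_le kap n ltac:(lra)). assert (kap ^ n <= 1) by (apply pow_le_one; lra). nra. }
      apply Rabs_le_inv in Hr.
      assert (- Rabs (sb (S n)) * kap <= sb (S n) * Re (Cpow w (S n))).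
      { pose proof (Rabs_pos (sb (S n))). destruct (Rcase_abs (sb (S n))).
        - rewrite Rabs_left by auto. nra.
        - rewrite Rabs_right by auto. nra. }
      nra. }
  apply (Un_cv_ge _ _ 0 _ H1). intros n _. specialize (B n).
  pose proof (sb_abs_partial n). nra.
Qed.

Lemma S_is_sqrt Sv : Cseries_cv Sterm Sv -> Sv = Csqrt (Cadd C1 w).
Proof.
  intro H. apply sqrt_unique; [apply S_square; auto|]. pose proof (S_Re_pos Sv H). lra.
Qed.

Lemma one_plus_w_nz : Cadd C1 w <> C0.
Proof.
  intro E. assert (Re (Cadd C1 w) = 0) by (rewrite E; reflexivity). simpl in H.
  pose proof Re_w_bound. lra.
Qed.

Definition Gterm (k : nat) : Cplx := Cpow (Copp w) k.

Lemma CAbs_Gterm : CAbs Gterm.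
Proof.
  apply (CAbs_geomlike _ kap 2); auto. intro k. unfold Gterm. apply n1_pow_bound; [lra|].
  rewrite <- Hw. unfold Cnorm2; simpl; ring.
Qed.

Lemma G_sum : Cseries_cv Gterm (Cinv (Cadd C1 w)).
Proof.
  set (c := Cinv (Cadd C1 w)).
  assert (Hc : Cmul (Cadd C1 w) c = C1) by (apply Cmul_inv_r, one_plus_w_nz).
  assert (E : forall n, Csumn Gterm n = Cmul c (Cadd C1 (Copp (Cpow (Copp w) (S n))))).
  { intro n. pose proof (geom_C (Copp w) n) as G. unfold Gterm.
    transitivity (Cmul (Cmul (Csumn (fun j => Cpow (Copp w) j) n) (Cadd (Copp w) (Copp C1))) (Copp c)).
    - transitivity (Cmul (Csumn (fun j => Cpow (Copp w) j) n) (Cmul (Cadd C1 w) c)); [rewrite Hc; Cring| Cring].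
    - rewrite G. Cring. }
  assert (V : Ccv (fun n => Cadd C1 (Copp (Cpow (Copp w) (S n)))) C1).
  { assert (Hw' : Cnorm2 (Copp w) = kap * kap) by (rewrite <- Hw; unfold Cnorm2; simpl; ring).
    assert (Z : forall eps, 0 < eps -> exists N, forall n, (n >= N)%nat -> kap ^ S n < eps).
    { intros eps He. destruct (pow_lt_1_zero kap ltac:(rewrite Rabs_right; lra) eps He) as [N HN].
      exists N. intros n Hn. specialize (HN (S n) ltac:(lia)). rewrite Rabs_right in HN; auto.
      apply Rle_ge, pow_le; lra. }
    split; intros eps He; destruct (Z eps He) as [N HN]; exists N; intros n Hn;
      destruct (pow_part_bound (Copp w) kap (S n) ltac:(lra) Hw') as [B1 B2];
      specialize (HN n Hn); unfold Rdist.
    - change (Re (Cadd C1 (Copp (Cpow (Copp w) (S n))))) with (1 + - Re (Cpow (Copp w) (S n))).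
      change (Re C1) with 1.
      replace (1 + - Re (Cpow (Copp w) (S n)) - 1) with (- Re (Cpow (Copp w) (S n))) by ring.
      rewrite Rabs_Ropp. lra.
    - change (Im (Cadd C1 (Copp (Cpow (Copp w) (S n))))) with (0 + - Im (Cpow (Copp w) (S n))).
      change (Im C1) with 0.
      replace (0 + - Im (Cpow (Copp w) (S n)) - 0) with (- Im (Cpow (Copp w) (S n))) by ring.
      rewrite Rabs_Ropp. lra. }
  pose proof (Ccv_scal c _ _ V) as V'. replace (Cmul c C1) with c in V' by Cring.
  destruct V' as [V1 V2]. split.
  - eapply Un_cv_ext; [|exact V1]. intro n. cbv beta. rewrite <- E. reflexivity.
  - eapply Un_cv_ext; [|exact V2]. intro n. cbv beta. rewrite <- E. reflexivity.
Qed.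

Definition tcoef (n : nat) : R := sum_f_R0 (fun k => sb k * (-1) ^ (n - k)) n.

Lemma tcoef_bound n : Rabs (tcoef n) <= 2.
Proof.
  unfold tcoef. eapply Rle_trans; [apply sum_f_R0_triangle|].
  eapply Rle_trans; [|apply (sb_abs_partial n)]. apply sum_Rle. intros k _.
  rewrite Rabs_mult, pow_1_abs. lra.
Qed.

Lemma inv_sqrt_series :
  Cseries_cv (fun n => Cmul (RtoC (tcoef n)) (Cpow w n)) (Cinv (Csqrt (Cadd C1 w))).
Proof.
  destruct (CAbs_ex _ CAbs_Sterm) as [Sv HS].
  pose proof (Cseries_mult _ _ _ _ HS G_sum CAbs_Sterm CAbs_Gterm) as H.
  rewrite <- (S_is_sqrt Sv HS).
  replace (Cinv Sv) with (Cmul Sv (Cinv (Cadd C1 w))).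
  - eapply Cseries_ext; [|exact H]. intro n. simpl.
    unfold tcoef. rewrite <- Csumn_RtoC, <- Csumn_mul_r. apply Csumn_ext. intros k Hk.
    unfold Sterm, Gterm. replace (Cpow w n) with (Cpow w (k + (n - k))) by (f_equal; lia).
    rewrite Cpow_add.
    assert (Eo : forall j, Cpow (Copp w) j = Cmul (RtoC ((-1) ^ j)) (Cpow w j)).
    { induction j; [Cring| simpl Cpow; rewrite IHj; simpl pow; Cring]. }
    rewrite Eo. Cring.
  - apply Cinv_unique. transitivity (Cmul (Cmul Sv Sv) (Cinv (Cadd C1 w))); [Cring|].
    rewrite S_square by auto. apply Cmul_inv_r, one_plus_w_nz.
Qed.

End Sqrt_series.

(* spreading a series in w = kap z^2 to a series in z *)
Definition spread (c : nat -> Cplx) (m : nat) : Cplx :=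
  if Nat.even m then c (Nat.div2 m) else C0.

Lemma sum_spread_aux (x : nat -> R) n :
  sum_f_R0 (fun m => if Nat.even m then x (Nat.div2 m) else 0) (2 * n) = sum_f_R0 x n /\
  sum_f_R0 (fun m => if Nat.even m then x (Nat.div2 m) else 0) (S (2 * n)) = sum_f_R0 x n.
Proof.
  induction n.
  - simpl. split; ring.
  - destruct IHn as [I1 I2].
    assert (E1 : Nat.even (2 * S n) = true) by (rewrite Nat.even_mul; reflexivity).
    assert (E2 : Nat.even (S (2 * S n)) = false) by (rewrite Nat.even_succ, <- Nat.negb_even, E1; reflexivity).
    assert (D : Nat.div2 (2 * S n) = S n) by apply Nat.div2_double.
    replace (2 * S n)%nat with (S (S (2 * n))) in * by lia.
    split.
    + rewrite tech5, I2. rewrite E1, D. rewrite tech5. reflexivity.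
    + rewrite tech5, tech5, I2, E1, E2, D, tech5. ring.
Qed.

Lemma sum_spread (x : nat -> R) m :
  sum_f_R0 (fun m => if Nat.even m then x (Nat.div2 m) else 0) m = sum_f_R0 x (Nat.div2 m).
Proof.
  destruct (Nat.Even_or_Odd m) as [[n Hn]|[n Hn]]; subst.
  - rewrite Nat.div2_double. apply sum_spread_aux.
  - replace (2 * n + 1)%nat with (S (2 * n)) by lia. rewrite Nat.div2_succ_double. apply sum_spread_aux.
Qed.

Lemma Un_cv_div2 u l : Un_cv u l -> Un_cv (fun m => u (Nat.div2 m)) l.
Proof.
  intros H eps He. destruct (H eps He) as [N HN]. exists (2 * N)%nat. intros m Hm.
  apply HN. pose proof (Nat.div2_le_mono _ _ Hm). rewrite Nat.div2_double in H0. lia.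
Qed.

Lemma Cseries_spread (c : nat -> Cplx) (B : nat -> Cplx) L :
  Cseries_cv c L -> (forall m, B m = spread c m) -> Cseries_cv B L.
Proof.
  intros [H1 H2] E. split.
  - eapply Un_cv_ext; [|apply (Un_cv_div2 _ _ H1)]. intro m. simpl.
    rewrite <- (sum_spread (fun k => Re (c k))). apply sum_eq. intros i _. rewrite E. unfold spread.
    destruct (Nat.even i); reflexivity.
  - eapply Un_cv_ext; [|apply (Un_cv_div2 _ _ H2)]. intro m. simpl.
    rewrite <- (sum_spread (fun k => Im (c k))). apply sum_eq. intros i _. rewrite E. unfold spread.
    destruct (Nat.even i); reflexivity.
Qed.

Lemma ex_series_spread (x : nat -> R) : ex_series x -> ex_series (fun m => if Nat.even m then x (Nat.div2 m) else 0).
Proof.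
  intros [L HL]. exists L. apply Un_cv_is_series. apply Un_cv_is_series in HL.
  eapply Un_cv_ext; [|apply (Un_cv_div2 _ _ HL)]. intro m. simpl. rewrite sum_spread. reflexivity.
Qed.

Definition icoef (kap : R) (m : nat) : Cplx := spread (fun n => RtoC (tcoef n * kap ^ n)) m.

Lemma Cpow_wz kap z n : Cpow (Cmul (RtoC kap) (Cmul z z)) n = Cmul (RtoC (kap ^ n)) (Cpow z (2 * n)).
Proof.
  induction n.
  - Cring.
  - replace (2 * S n)%nat with (S (S (2 * n))) by lia. simpl Cpow. rewrite IHn. simpl pow. Cring.
Qed.

Lemma inv_delta_PS kap : 0 <= kap < 1 ->
  PS (icoef kap) (fun z => Cinv (Csqrt (Cadd C1 (Cmul (RtoC kap) (Cmul z z))))).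
Proof.
  intro Hk. split.
  - unfold CAbs. apply (ex_series_R_le _ (fun m => if Nat.even m then 2 * kap ^ (Nat.div2 m) else 0)).
    + intro m. split; [apply n1_ge0|]. unfold icoef, spread. destruct (Nat.even m).
      * unfold n1, RtoC; simpl. rewrite Rabs_R0, Rplus_0_r. rewrite Rabs_mult.
        rewrite (Rabs_right (kap ^ _)) by (apply Rle_ge, pow_le; lra).
        pose proof (tcoef_bound (Nat.div2 m)). pose proof (pow_le kap (Nat.div2 m) ltac:(lra)). nra.
      * unfold n1; simpl; rewrite Rabs_R0; lra.
    + apply (ex_series_spread (fun n => 2 * kap ^ n)). apply ex_series_geom2; auto.
  - intros z Hz.
    set (w := Cmul (RtoC kap) (Cmul z z)).
    assert (Hw : Cnorm2 w = kap * kap).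
    { unfold w. rewrite !Cnorm2_mul, Hz. unfold Cnorm2, RtoC; simpl. ring. }
    apply (Cseries_spread _ _ _ (inv_sqrt_series kap Hk w Hw)).
    intro m. unfold spread, icoef, spread. destruct (Nat.even m) eqn:Em.
    + unfold w. rewrite Cpow_wz.
      apply Nat.even_spec in Em. destruct Em as [n Hn]. subst m. rewrite Nat.div2_double.
      apply Ceq; unfold RtoC; simpl; ring.
    + Cring.
Qed.

Lemma icoef0 kap : icoef kap 0 = C1.
Proof. unfold icoef, spread, tcoef; simpl. apply Ceq; simpl; ring. Qed.
Lemma Cnorm_ge_abs_Im z : Rabs (Im z) <= Cnorm z.
Proof.
  unfold Cnorm, Cnorm2. rewrite <- sqrt_Rsqr_abs. apply sqrt_le_1_alt. unfold Rsqr. nra.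
Qed.

Lemma n1_le_Cnorm z : n1 z <= 2 * Cnorm z.
Proof. unfold n1. pose proof (Cnorm_ge_abs z). pose proof (Cnorm_ge_abs_Im z). lra. Qed.

Lemma Cnorm_ge0 z : 0 <= Cnorm z.
Proof. apply sqrt_pos. Qed.

Lemma abs_summable_ex f : abs_summable_Z f ->
  ex_series (fun n => Cnorm (f (Z.of_nat n)) + Cnorm (f (- Z.of_nat n)%Z)).
Proof. intros [l H]. exists l. apply Un_cv_is_series; auto. Qed.

Lemma Cpowz_pos l n : Cpowz l (Z.of_nat n) = Cpow l n.
Proof.
  unfold Cpowz. destruct (0 <=? Z.of_nat n)%Z eqn:E.
  - rewrite Nat2Z.id. reflexivity.
  - apply Z.leb_gt in E. lia.
Qed.

Lemma Cinv_S1 z : Cnorm2 z = 1 -> Cinv z = Cconj z.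
Proof. intro H. unfold Cinv. rewrite H. apply Ceq; simpl; field. Qed.

Lemma Cpowz_neg l n : onS1 l -> (1 <= n)%nat -> Cpowz l (- Z.of_nat n) = Cpow (Cconj l) n.
Proof.
  intros Hl Hn. unfold Cpowz. destruct (0 <=? - Z.of_nat n)%Z eqn:E.
  - apply Z.leb_le in E. lia.
  - rewrite Z.opp_involutive, Nat2Z.id. rewrite Cinv_S1 by (apply Cnorm2_pow; auto).
    rewrite Cpow_conj. reflexivity.
Qed.

Lemma wiener_plus h c : wiener_coeffs h c -> (forall k, (k < 0)%Z -> c k = C0) ->
  PS (fun n => c (Z.of_nat n)) h.
Proof.
  intros [Ha Hs] Hz. split.
  - unfold CAbs. apply (ex_series_R_le _ (fun n => 2 * (Cnorm (c (Z.of_nat n)) + Cnorm (c (- Z.of_nat n)%Z)))).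
    + intro n; split; [apply n1_ge0|]. pose proof (n1_le_Cnorm (c (Z.of_nat n))).
      pose proof (Cnorm_ge0 (c (- Z.of_nat n)%Z)). lra.
    + apply ex_series_R_scal, abs_summable_ex; auto.
  - intros l Hl. eapply Cseries_ext; [|exact (Hs l Hl)].
    intro n. unfold laurent_term. rewrite Cpowz_pos. destruct (Nat.eqb n 0) eqn:E.
    + Cring.
    + apply Nat.eqb_neq in E. rewrite (Hz (- Z.of_nat n)%Z) by lia. Cring.
Qed.

Lemma wiener_minus h c : wiener_coeffs h c -> (forall k, (0 < k)%Z -> c k = C0) ->
  PS (fun n => c (- Z.of_nat n)%Z) (fun l => h (Cconj l)).
Proof.
  intros [Ha Hs] Hz. split.
  - unfold CAbs. apply (ex_series_R_le _ (fun n => 2 * (Cnorm (c (Z.of_nat n)) + Cnorm (c (- Z.of_nat n)%Z)))).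
    + intro n; split; [apply n1_ge0|]. pose proof (n1_le_Cnorm (c (- Z.of_nat n)%Z)).
      pose proof (Cnorm_ge0 (c (Z.of_nat n))). lra.
    + apply ex_series_R_scal, abs_summable_ex; auto.
  - intros l Hl. eapply Cseries_ext; [|exact (Hs (Cconj l) (onS1_conj _ Hl))].
    intro n. unfold laurent_term. destruct (Nat.eqb n 0) eqn:E.
    + apply Nat.eqb_eq in E. subst n. simpl. Cring.
    + apply Nat.eqb_neq in E. rewrite (Hz (Z.of_nat n)) by lia.
      rewrite Cpowz_neg by (auto using onS1_conj; lia). rewrite Cconj_conj. Cring.
Qed.

Lemma loop_plus g c : loop_coeffs g c -> (forall k, (k < 0)%Z -> c k = Mzero) ->
  MPS (fun n => c (Z.of_nat n)) g.
Proof.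
  intros (H1 & H2 & H3 & H4) Hz.
  split; [|split; [|split]]; [apply (wiener_plus _ _ H1)|apply (wiener_plus _ _ H2)
    |apply (wiener_plus _ _ H3)|apply (wiener_plus _ _ H4)]; intros k Hk; rewrite Hz; auto.
Qed.

Lemma loop_minus g c : loop_coeffs g c -> (forall k, (0 < k)%Z -> c k = Mzero) ->
  MPS (fun n => c (- Z.of_nat n)%Z) (fun l => g (Cconj l)).
Proof.
  intros (H1 & H2 & H3 & H4) Hz.
  split; [|split; [|split]]; [apply (wiener_minus _ _ H1)|apply (wiener_minus _ _ H2)
    |apply (wiener_minus _ _ H3)|apply (wiener_minus _ _ H4)]; intros k Hk; rewrite Hz; auto.
Qed.

Lemma LPS_Pside g : LambdaPlusStar g -> Pside g.
Proof. intros [_ [c [H [Hz H0]]]]. exists (fun n => c (Z.of_nat n)). split; [apply loop_plus; auto| exact H0]. Qed.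
Lemma LP_Pany g : LambdaPlus g -> Pany g.
Proof. intros [_ [c [H Hz]]]. exists (fun n => c (Z.of_nat n)). apply loop_plus; auto. Qed.
Lemma LM_Nside g : LambdaMinus g -> Nside g.
Proof. intros [_ [c [H Hz]]]. exists (fun n => c (- Z.of_nat n)%Z). apply loop_minus; auto. Qed.
Lemma LMS_NsideI g : LambdaMinusStar g -> NsideI g.
Proof. intros [_ [c [H [Hz H0]]]]. exists (fun n => c (- Z.of_nat n)%Z). split; [apply loop_minus; auto| exact H0]. Qed.
Lemma LSU_det g : LambdaSU2 g -> forall l, onS1 l -> Mdet (g l) = C1.
Proof. intros [_ H] l Hl. apply H; auto. Qed.

Lemma Nside_mul A B : Nside A -> Nside B -> Nside (fun l => Mmul (A l) (B l)).
Proof. intros HA HB. apply (Pany_mul _ _ HA HB). Qed.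
Lemma NsideI_mul A B : NsideI A -> NsideI B -> NsideI (fun l => Mmul (A l) (B l)).
Proof. intros HA HB. apply (Pside_mul _ _ HA HB). Qed.
Lemma NsideI_adj A : NsideI A -> NsideI (fun l => Madj (A l)).
Proof. intros HA. apply (Pside_adj _ HA). Qed.
Lemma Nside_const M : Nside (fun _ => M).
Proof. apply Pany_const. Qed.
Lemma NsideI_id : NsideI (fun _ => Mid).
Proof. apply Pside_id. Qed.
Lemma NsideI_Nside A : NsideI A -> Nside A.
Proof. apply Pside_any. Qed.
Lemma Pany_Nside_conj B : Pany B -> Nside (fun l => B (Cconj l)).
Proof.
  intro H. unfold Nside. eapply Pany_fun; [exact H|]. intros; rewrite Cconj_conj; auto.
Qed.

Lemma birkhoffN A1 A2 B1 B2 :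
  NsideI A1 -> NsideI A2 -> Pany B1 -> Pany B2 ->
  (forall l, onS1 l -> Mdet (A2 l) = C1) -> (forall l, onS1 l -> Mdet (B1 l) = C1) ->
  (forall l, onS1 l -> Mmul (A1 l) (B1 l) = Mmul (A2 l) (B2 l)) ->
  forall l, onS1 l -> A1 l = A2 l /\ B1 l = B2 l.
Proof.
  intros H1 H2 H3 H4 D2 D1 E l Hl.
  pose proof (birkhoff (fun l => A1 (Cconj l)) (fun l => A2 (Cconj l))
                       (fun l => B1 (Cconj l)) (fun l => B2 (Cconj l)) H1 H2
                       (Pany_Nside_conj _ H3) (Pany_Nside_conj _ H4)
                       ltac:(intros; apply D2, onS1_conj; auto)
                       ltac:(intros; apply D1, onS1_conj; auto)
                       ltac:(intros; apply E, onS1_conj; auto) (Cconj l) (onS1_conj _ Hl)) as R.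
  cbv beta in R. rewrite Cconj_conj in R. exact R.
Qed.

Lemma Z_ind_both (P : Z -> Prop) : P 0%Z -> (forall k, P k -> P (k + 1)%Z) ->
  (forall k, P k -> P (k - 1)%Z) -> forall k, P k.
Proof.
  intros H0 Hu Hd k. induction k using Z.peano_ind; auto.
  - rewrite <- Z.add_1_r. auto.
  - rewrite <- Z.sub_1_r. auto.
Qed.
Lemma mat_series f e d1 d2 x y : PS e f ->
  Pany (fun l => Mscal (f l) (mkM2 d1 (Cmul x l) (Cmul y l) d2)).
Proof.
  intro H.
  exists (fun k => mkM2 (Cmul d1 (e k)) (Cmul x (shift e k)) (Cmul y (shift e k)) (Cmul d2 (e k))).
  split; [|split; [|split]]; simpl.
  - eapply PS_fun; [apply (PS_scal d1 _ _ H)|]. intros; Cring.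
  - eapply PS_fun; [apply (PS_scal x _ _ (PS_shift _ _ H))|]. intros; Cring.
  - eapply PS_fun; [apply (PS_scal y _ _ (PS_shift _ _ H))|]. intros; Cring.
  - eapply PS_fun; [apply (PS_scal d2 _ _ H)|]. intros; Cring.
Qed.

Lemma mat_series_I f e x y : PS e f -> e 0%nat = C1 ->
  Pside (fun l => Mscal (f l) (mkM2 C1 (Cmul x l) (Cmul y l) C1)).
Proof.
  intros H E.
  exists (fun k => mkM2 (Cmul C1 (e k)) (Cmul x (shift e k)) (Cmul y (shift e k)) (Cmul C1 (e k))).
  split; [split; [|split; [|split]]; simpl|].
  - eapply PS_fun; [apply (PS_scal C1 _ _ H)|]. intros; Cring.
  - eapply PS_fun; [apply (PS_scal x _ _ (PS_shift _ _ H))|]. intros; Cring.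
  - eapply PS_fun; [apply (PS_scal y _ _ (PS_shift _ _ H))|]. intros; Cring.
  - eapply PS_fun; [apply (PS_scal C1 _ _ H)|]. intros; Cring.
  - simpl. rewrite E. Mring.
Qed.

Lemma kap_bound (p : R) : 0 < Rabs (p / 2) < 1 -> 0 <= (p / 2) ^ 2 < 1.
Proof.
  intro H. split; [apply pow2_ge_0|]. rewrite <- Rabs_pos_eq with (x := (p/2)^2) by apply pow2_ge_0.
  rewrite <- RPow_abs. simpl. nra.
Qed.

Lemma xi_plus_Pside p a : 0 < Rabs (p / 2) < 1 -> Pside (xi_plus p a).
Proof.
  intro H. eapply Pside_fun.
  - apply (mat_series_I (fun l => Cinv (DeltaP p l)) (icoef ((p / 2) ^ 2))
             (Cmul (halfI p) (Cexpi (- a))) (Cmul (halfI p) (Cexpi a))).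
    + apply inv_delta_PS, kap_bound; auto.
    + apply icoef0.
  - intros l Hl. unfold xi_plus. Mring.
Qed.

Lemma U_Pany u p n m : 0 < Rabs (p n / 2) < 1 -> Pany (Umat u p n m).
Proof.
  intro H. eapply Pany_fun.
  - apply (mat_series (fun l => Cinv (DeltaP (p n) l)) (icoef ((p n / 2) ^ 2))
             (Cexpi (- (u (n + 1)%Z m - u n m) / 2)) (Cexpi ((u (n + 1)%Z m - u n m) / 2))
             (halfI (p n)) (halfI (p n))).
    apply inv_delta_PS, kap_bound; auto.
  - intros l Hl. unfold Umat. reflexivity.
Qed.

Lemma Cinv_ll l : onS1 l -> Cinv (Cmul (Cconj l) (Cconj l)) = Cmul l l.
Proof.
  intro Hl. rewrite Cinv_S1.
  - Cring.
  - rewrite Cnorm2_mul. pose proof (onS1_conj _ Hl). unfold onS1 in H. rewrite H. ring.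
Qed.

Lemma Cinv_conj_S1 l : onS1 l -> Cinv (Cconj l) = l.
Proof.
  intro Hl. rewrite Cinv_S1; [apply Cconj_conj| apply onS1_conj; auto].
Qed.

Lemma V_NsideI u q n m : 0 < Rabs (q m / 2) < 1 -> NsideI (Vmat u q n m).
Proof.
  intro H. unfold NsideI. eapply Pside_fun.
  - apply (mat_series_I (fun l => Cinv (Csqrt (Cadd C1 (Cmul (RtoC ((q m / 2) ^ 2)) (Cmul l l)))))
             (icoef ((q m / 2) ^ 2))
             (Copp (Cmul (halfI (q m)) (Cexpi ((u n (m + 1)%Z + u n m) / 2))))
             (Copp (Cmul (halfI (q m)) (Cexpi (- (u n (m + 1)%Z + u n m) / 2))))).
    + apply inv_delta_PS, kap_bound; auto.
    + apply icoef0.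
  - intros l Hl. unfold Vmat, DeltaM. rewrite Cinv_ll, Cinv_conj_S1 by auto. Mring.
Qed.

Lemma Re_1kll kap l : 0 <= kap < 1 -> onS1 l -> 0 < Re (Cadd C1 (Cmul (RtoC kap) (Cmul l l))).
Proof.
  intros Hk Hl. assert (Hn : Cnorm2 (Cmul l l) = 1) by (rewrite Cnorm2_mul, Hl; ring).
  destruct (unit_bound _ Hn) as [B _]. apply Rabs_le_inv in B.
  assert (E : Re (Cadd C1 (Cmul (RtoC kap) (Cmul l l))) = 1 + kap * Re (Cmul l l))
    by (unfold RtoC, Cadd, C1; cbn [Re Im]; unfold Cmul at 1; cbn [Re Im]; ring).
  rewrite E. nra.
Qed.

Lemma sqrt_nz z : 0 < Re z -> Csqrt z <> C0.
Proof.
  intros H E. pose proof (Csqrt_Re_pos z H). rewrite E in H0. simpl in H0. lra.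
Qed.

Lemma det_scal c M : Mdet (Mscal c M) = Cmul (Cmul c c) (Mdet M).
Proof. unfold Mdet; simpl. Cring. Qed.

Lemma inv_sq_cancel D : D <> C0 -> Cmul (Cmul (Cinv D) (Cinv D)) (Cmul D D) = C1.
Proof.
  intro H. transitivity (Cmul (Cmul D (Cinv D)) (Cmul D (Cinv D))); [Cring|].
  rewrite Cmul_inv_r by auto. Cring.
Qed.

Lemma U_det u p n m l : 0 < Rabs (p n / 2) < 1 -> onS1 l -> Mdet (Umat u p n m l) = C1.
Proof.
  intros H Hl. unfold Umat. rewrite det_scal.
  set (D := DeltaP (p n) l).
  assert (HD : Cmul D D = Cadd C1 (Cmul (RtoC ((p n / 2) ^ 2)) (Cmul l l))) by apply Csqrt_sq.
  assert (Dnz : D <> C0) by (apply sqrt_nz, Re_1kll; [apply kap_bound|]; auto).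
  set (t := (u (n + 1)%Z m - u n m) / 2).
  replace (- (u (n + 1)%Z m - u n m) / 2) with (- t) by (unfold t; field).
  assert (HE : Cmul (Cexpi (- t)) (Cexpi t) = C1).
  { rewrite Cexpi_add. replace (- t + t) with 0 by ring. apply Ceq; simpl; [apply cos_0| apply sin_0]. }
  transitivity (Cmul (Cmul (Cinv D) (Cinv D)) (Cadd (Cmul (Cexpi (- t)) (Cexpi t)) (Cmul (RtoC ((p n / 2) ^ 2)) (Cmul l l)))).
  - unfold Mdet; simpl. unfold halfI. Cring.
  - rewrite HE, <- HD. apply inv_sq_cancel; auto.
Qed.

Lemma V_det u q n m l : 0 < Rabs (q m / 2) < 1 -> onS1 l -> Mdet (Vmat u q n m l) = C1.
Proof.
  intros H Hl. unfold Vmat. rewrite det_scal.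
  set (D := DeltaM (q m) l).
  assert (Hi : Cinv (Cmul l l) = Cmul (Cinv l) (Cinv l)).
  { rewrite !Cinv_S1; [Cring| auto| rewrite Cnorm2_mul, Hl; ring]. }
  assert (HD : Cmul D D = Cadd C1 (Cmul (RtoC ((q m / 2) ^ 2)) (Cmul (Cinv l) (Cinv l)))).
  { unfold D, DeltaM. rewrite Csqrt_sq, Hi. reflexivity. }
  assert (Dnz : D <> C0).
  { unfold D, DeltaM. apply sqrt_nz. rewrite Hi, Cinv_S1 by auto.
    apply Re_1kll; [apply kap_bound; auto| apply onS1_conj; auto]. }
  set (t := (u n (m + 1)%Z + u n m) / 2).
  replace (- (u n (m + 1)%Z + u n m) / 2) with (- t) by (unfold t; field).
  assert (HE : Cmul (Cexpi t) (Cexpi (- t)) = C1).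
  { rewrite Cexpi_add. replace (t + - t) with 0 by ring. apply Ceq; simpl; [apply cos_0| apply sin_0]. }
  transitivity (Cmul (Cmul (Cinv D) (Cinv D)) (Cadd C1 (Cmul (Cmul (RtoC ((q m / 2) ^ 2)) (Cmul (Cexpi t) (Cexpi (- t)))) (Cmul (Cinv l) (Cinv l))))).
  - unfold Mdet; simpl. unfold halfI. Cring.
  - rewrite HE. replace (Cmul (Cmul (RtoC ((q m / 2) ^ 2)) C1) (Cmul (Cinv l) (Cinv l)))
      with (Cmul (RtoC ((q m / 2) ^ 2)) (Cmul (Cinv l) (Cinv l))) by Cring.
    rewrite <- HD. apply inv_sq_cancel; auto.
Qed.

Definition Dm (t : R) : M2 := mkM2 (Cexpi (- t)) C0 C0 (Cexpi t).

Lemma Dm_mul s t : Mmul (Dm s) (Dm t) = Dm (s + t).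
Proof.
  unfold Dm. apply Meq; simpl.
  - transitivity (Cmul (Cexpi (- s)) (Cexpi (- t))); [Cring|]. rewrite Cexpi_add. f_equal; ring.
  - Cring.
  - Cring.
  - transitivity (Cmul (Cexpi s) (Cexpi t)); [Cring|]. rewrite Cexpi_add. reflexivity.
Qed.

Lemma Dm_0 : Dm 0 = Mid.
Proof. unfold Dm. rewrite Ropp_0. apply Meq; simpl; apply Ceq; simpl; try rewrite cos_0; try rewrite sin_0; reflexivity. Qed.

Lemma Dm_adj t : Madj (Dm t) = Dm (- t).
Proof. unfold Dm, Madj. rewrite Ropp_involutive. apply Meq; simpl; auto; Cring. Qed.

Lemma Dm_det t : Mdet (Dm t) = C1.
Proof. unfold Mdet, Dm; simpl. rewrite Cexpi_add. replace (- t + t) with 0 by ring.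
  apply Ceq; simpl; [rewrite cos_0| rewrite sin_0]; ring. Qed.

Lemma DXD a b f x y : Mmul (Mmul (Dm a) (Mscal f (mkM2 C1 x y C1))) (Dm b) =
  Mscal f (mkM2 (Cexpi (- (a + b))) (Cmul (Cexpi (b - a)) x) (Cmul (Cexpi (a - b)) y) (Cexpi (a + b))).
Proof.
  unfold Dm. apply Meq; simpl.
  - transitivity (Cmul f (Cmul (Cexpi (- a)) (Cexpi (- b)))); [Cring|]. rewrite Cexpi_add. f_equal. f_equal. f_equal. ring.
  - transitivity (Cmul f (Cmul (Cmul (Cexpi (- a)) (Cexpi b)) x)); [Cring|]. rewrite Cexpi_add.
    replace (- a + b) with (b - a) by ring. Cring.
  - transitivity (Cmul f (Cmul (Cmul (Cexpi a) (Cexpi (- b))) y)); [Cring|]. rewrite Cexpi_add.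
    replace (a + - b) with (a - b) by ring. Cring.
  - transitivity (Cmul f (Cmul (Cexpi a) (Cexpi b))); [Cring|]. rewrite Cexpi_add. Cring.
Qed.

Definition ee (u : Z -> Z -> R) (n : Z) : R := (u n 0%Z - u 0%Z 0%Z) / 2.

Lemma U_decomp u p n l :
  Umat u p n 0%Z l = Mmul (Mmul (Dm (- ee u n)) (xi_plus (p n) (alpha u n) l)) (Dm (ee u (n + 1)%Z)).
Proof.
  unfold xi_plus. rewrite DXD. unfold Umat. f_equal. apply Meq; simpl.
  - f_equal. unfold ee. field.
  - transitivity (Cmul (Cmul (Cexpi (ee u (n + 1) - - ee u n)) (Cexpi (- alpha u n))) (Cmul (halfI (p n)) l)); [|Cring].
    rewrite Cexpi_add. replace (ee u (n + 1) - - ee u n + - alpha u n) with 0 by (unfold ee, alpha; field).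
    apply Ceq; simpl; rewrite ?cos_0, ?sin_0; ring.
  - transitivity (Cmul (Cmul (Cexpi (- ee u n - ee u (n + 1))) (Cexpi (alpha u n))) (Cmul (halfI (p n)) l)); [|Cring].
    rewrite Cexpi_add. replace (- ee u n - ee u (n + 1) + alpha u n) with 0 by (unfold ee, alpha; field).
    apply Ceq; simpl; rewrite ?cos_0, ?sin_0; ring.
  - f_equal. unfold ee. field.
Qed.

Lemma V_xi u q m l : Vmat u q 0%Z m l = xi_minus (q m) (beta u m) l.
Proof.
  unfold Vmat, xi_minus, beta. f_equal. f_equal.
  - f_equal. f_equal. f_equal. f_equal. field.
  - f_equal. f_equal. f_equal. f_equal. field.
Qed.
Lemma Mdet_id : Mdet Mid = C1.
Proof. unfold Mdet; simpl. Cring. Qed.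

Lemma cancel_D A e X B : Mmul (Mmul A (Dm e)) (Mmul (Mmul (Dm (- e)) X) B) = Mmul (Mmul A X) B.
Proof.
  transitivity (Mmul (Mmul A (Mmul (Dm e) (Dm (- e)))) (Mmul X B)); [Mring|].
  rewrite Dm_mul, Rplus_opp_r, Dm_0. Mring.
Qed.

Lemma cancel_D2 A e Y B : Mmul (Mmul A (Dm e)) (Mmul (Dm (- e)) (Mmul Y B)) = Mmul (Mmul A Y) B.
Proof.
  transitivity (Mmul (Mmul A (Mmul (Dm e) (Dm (- e)))) (Mmul Y B)); [Mring|].
  rewrite Dm_mul, Rplus_opp_r, Dm_0. Mring.
Qed.

Theorem theorem2p1
  (u : Z -> Z -> R) (p q : Z -> R)
  (hp : forall n : Z, 0 < Rabs (p n / 2) < 1)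
  (hq : forall m : Z, 0 < Rabs (q m / 2) < 1)
  (F : Z -> Z -> Cplx -> M2)
  (hF : discrete_extended_frame F u p q)
  (Fp Fm Gm Gp : Z -> Z -> Cplx -> M2)
  (hFp : forall n m, LambdaPlusStar (Fp n m))
  (hFm : forall n m, LambdaMinus (Fm n m))
  (hGm : forall n m, LambdaMinusStar (Gm n m))
  (hGp : forall n m, LambdaPlus (Gp n m))
  (hFdec : forall n m l, onS1 l -> F n m l = Mmul (Fp n m l) (Fm n m l))
  (hGdec : forall n m l, onS1 l -> F n m l = Mmul (Gm n m l) (Gp n m l)) :
  (forall n m m' l, onS1 l -> Fp n m l = Fp n m' l) /\
  (forall n n' m l, onS1 l -> Gm n m l = Gm n' m l) /\
  (forall n m l, onS1 l ->
     Mmul (Minv (Fp n m l)) (Fp (n + 1)%Z m l) = xi_plus (p n) (alpha u n) l) /\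
  (forall n m l, onS1 l ->
     Mmul (Minv (Gm n m l)) (Gm n (m + 1)%Z l) = xi_minus (q m) (beta u m) l).
Proof.
  destruct hF as [LSU [F00 [FU FV]]].
  assert (dF : forall n m l, onS1 l -> Mdet (F n m l) = C1) by (intros; apply LSU_det; auto).
  assert (dFp : forall n m l, onS1 l -> Mdet (Fp n m l) = C1)
    by (intros n m; destruct (hFp n m) as [S0 _]; apply LSU_det; auto).
  assert (dFm : forall n m l, onS1 l -> Mdet (Fm n m l) = C1)
    by (intros n m; destruct (hFm n m) as [S0 _]; apply LSU_det; auto).
  assert (dGm : forall n m l, onS1 l -> Mdet (Gm n m l) = C1)
    by (intros n m; destruct (hGm n m) as [S0 _]; apply LSU_det; auto).
  assert (dGp : forall n m l, onS1 l -> Mdet (Gp n m l) = C1)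
    by (intros n m; destruct (hGp n m) as [S0 _]; apply LSU_det; auto).
  assert (PFp : forall n m, Pside (Fp n m)) by (intros; apply LPS_Pside; auto).
  assert (NFm : forall n m, Nside (Fm n m)) by (intros; apply LM_Nside; auto).
  assert (NGm : forall n m, NsideI (Gm n m)) by (intros; apply LMS_NsideI; auto).
  assert (PGp : forall n m, Pany (Gp n m)) by (intros; apply LP_Pany; auto).
  assert (P1 : forall n m l, onS1 l -> Fp n (m + 1)%Z l = Fp n m l).
  { intros n m.
    refine (fun l Hl => proj1 (birkhoff (Fp n (m + 1)%Z) (Fp n m) (Fm n (m + 1)%Z)
      (fun l => Mmul (Fm n m l) (Vmat u q n m l)) (PFp _ _) (PFp _ _) (NFm _ _)
      (Nside_mul _ _ (NFm _ _) (NsideI_Nside _ (V_NsideI u q n m (hq m))))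
      (dFp n m) (dFm n (m + 1)%Z) _ l Hl)).
    intros l0 Hl0. rewrite <- hFdec, FV, hFdec by auto. apply Mmul_assoc. }
  assert (P1' : forall n m l, onS1 l -> Fp n m l = Fp n 0%Z l).
  { intros n m l Hl. revert m. apply Z_ind_both.
    - reflexivity.
    - intros k Hk. rewrite P1; auto.
    - intros k Hk. rewrite <- Hk. rewrite <- (P1 n (k - 1)%Z l Hl). f_equal. ring. }
  assert (G2 : forall n m l, onS1 l -> Gm (n + 1)%Z m l = Gm n m l).
  { intros n m.
    refine (fun l Hl => proj1 (birkhoffN (Gm (n + 1)%Z m) (Gm n m) (Gp (n + 1)%Z m)
      (fun l => Mmul (Gp n m l) (Umat u p n m l)) (NGm _ _) (NGm _ _) (PGp _ _)
      (Pany_mul _ _ (PGp _ _) (U_Pany u p n m (hp n)))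
      (dGm n m) (dGp (n + 1)%Z m) _ l Hl)).
    intros l0 Hl0. rewrite <- hGdec, FU, hGdec by auto. apply Mmul_assoc. }
  assert (G2' : forall n m l, onS1 l -> Gm n m l = Gm 0%Z m l).
  { intros n m l Hl. revert n. apply Z_ind_both.
    - reflexivity.
    - intros k Hk. rewrite G2; auto.
    - intros k Hk. rewrite <- Hk. rewrite <- (G2 (k - 1)%Z m l Hl). f_equal. ring. }
  set (C := fun n => forall l, onS1 l -> Fm n 0%Z l = Dm (ee u n)).
  assert (Up : forall n, C n -> forall l, onS1 l ->
     Mmul (Fp n 0%Z l) (xi_plus (p n) (alpha u n) l) = Fp (n + 1)%Z 0%Z l /\
     Dm (ee u (n + 1)%Z) = Fm (n + 1)%Z 0%Z l).
  { intros n Cn.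
    refine (birkhoff (fun l => Mmul (Fp n 0%Z l) (xi_plus (p n) (alpha u n) l)) (Fp (n + 1)%Z 0%Z)
      (fun _ => Dm (ee u (n + 1)%Z)) (Fm (n + 1)%Z 0%Z)
      (Pside_mul _ _ (PFp _ _) (xi_plus_Pside _ _ (hp n))) (PFp _ _) (Nside_const _) (NFm _ _)
      (dFp _ _) (fun _ _ => Dm_det _) _).
    intros l Hl. rewrite <- hFdec, FU, hFdec, Cn, U_decomp by auto. symmetry. apply cancel_D. }
  assert (Down : forall n, C n -> C (n - 1)%Z).
  { intros n Cn.
    assert (B := birkhoff (fun l => Mmul (Fp n 0%Z l) (Madj (xi_plus (p (n - 1)%Z) (alpha u (n - 1)%Z) l)))
      (Fp (n - 1)%Z 0%Z) (fun _ => Dm (ee u (n - 1)%Z)) (Fm (n - 1)%Z 0%Z)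
      (Pside_mul _ _ (PFp _ _) (Pside_adj _ (xi_plus_Pside _ _ (hp (n - 1)%Z)))) (PFp _ _)
      (Nside_const _) (NFm _ _) (dFp _ _) (fun _ _ => Dm_det _)).
    assert (Eq : forall l0, onS1 l0 ->
      Mmul (Mmul (Fp n 0%Z l0) (Madj (xi_plus (p (n - 1)%Z) (alpha u (n - 1)%Z) l0))) (Dm (ee u (n - 1)%Z))
      = Mmul (Fp (n - 1)%Z 0%Z l0) (Fm (n - 1)%Z 0%Z l0)).
    2: { intros l Hl. symmetry. exact (proj2 (B Eq l Hl)). }
    intros l0 Hl0. rewrite <- hFdec by auto.
    assert (EF : F n 0%Z l0 = Mmul (F (n - 1)%Z 0%Z l0) (Umat u p (n - 1)%Z 0%Z l0)).
    { rewrite <- FU by auto. f_equal. ring. }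
    transitivity (Mmul (F n 0%Z l0) (Madj (Umat u p (n - 1)%Z 0%Z l0))).
    - rewrite hFdec, Cn, U_decomp by auto.
      replace (n - 1 + 1)%Z with n by ring.
      rewrite !Madj_mul, !Dm_adj, Ropp_involutive.
      rewrite cancel_D2. reflexivity.
    - rewrite EF, Mmul_assoc, mul_adj_id by (apply U_det; auto). apply Mmul_id_r. }
  assert (C0 : C 0%Z).
  { intros l Hl.
    destruct (birkhoff (fun _ => Mid) (Fp 0%Z 0%Z) (fun _ => Mid) (Fm 0%Z 0%Z) Pside_id (PFp _ _)
      (Nside_const _) (NFm _ _) (dFp _ _) (fun _ _ => Mdet_id)
      ltac:(intros; rewrite <- hFdec, F00 by auto; apply Mmul_id_l) l Hl) as [_ E].
    rewrite <- E. unfold ee. replace ((u 0%Z 0%Z - u 0%Z 0%Z) / 2) with 0 by field. symmetry; apply Dm_0. }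
  assert (Call : forall n, C n).
  { apply Z_ind_both; auto. intros k Ck l Hl. symmetry. apply (Up k Ck l Hl). }
  set (Dd := fun m => forall l, onS1 l -> Gm 0%Z m l = F 0%Z m l /\ Gp 0%Z m l = Mid).
  assert (D0 : Dd 0%Z).
  { intros l Hl.
    destruct (birkhoffN (fun _ => Mid) (Gm 0%Z 0%Z) (fun _ => Mid) (Gp 0%Z 0%Z) NsideI_id (NGm _ _)
      (Pany_const _) (PGp _ _) (dGm _ _) (fun _ _ => Mdet_id)
      ltac:(intros; rewrite <- hGdec, F00 by auto; apply Mmul_id_l) l Hl) as [E1 E2].
    rewrite <- E1, <- E2, F00 by auto. split; reflexivity. }
  assert (DUp : forall m, Dd m -> Dd (m + 1)%Z).
  { intros m Dm_ l Hl.
    destruct (birkhoffN (fun l => Mmul (Gm 0%Z m l) (Vmat u q 0%Z m l)) (Gm 0%Z (m + 1)%Z)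
      (fun _ => Mid) (Gp 0%Z (m + 1)%Z) (NsideI_mul _ _ (NGm _ _) (V_NsideI u q 0%Z m (hq m))) (NGm _ _)
      (Pany_const _) (PGp _ _) (dGm _ _) (fun _ _ => Mdet_id)) with (l := l) as [E1 E2]; auto.
    - intros l0 Hl0. rewrite <- hGdec, FV by auto. rewrite Mmul_id_r. f_equal. apply Dm_; auto.
    - rewrite <- E1, <- E2. rewrite FV by auto. split; [f_equal; apply Dm_; auto| reflexivity]. }
  assert (DDown : forall m, Dd m -> Dd (m - 1)%Z).
  { intros m Dm_ l Hl.
    assert (EF : forall l0, onS1 l0 -> F 0%Z m l0 = Mmul (F 0%Z (m - 1)%Z l0) (Vmat u q 0%Z (m - 1)%Z l0)).
    { intros l0 Hl0. rewrite <- FV by auto. f_equal. ring. }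
    assert (EF' : forall l0, onS1 l0 -> F 0%Z (m - 1)%Z l0 = Mmul (F 0%Z m l0) (Madj (Vmat u q 0%Z (m - 1)%Z l0))).
    { intros l0 Hl0. rewrite EF, Mmul_assoc, mul_adj_id by (auto; apply V_det; auto). symmetry; apply Mmul_id_r. }
    destruct (birkhoffN (fun l => Mmul (Gm 0%Z m l) (Madj (Vmat u q 0%Z (m - 1)%Z l))) (Gm 0%Z (m - 1)%Z)
      (fun _ => Mid) (Gp 0%Z (m - 1)%Z)
      (NsideI_mul _ _ (NGm _ _) (NsideI_adj _ (V_NsideI u q 0%Z (m - 1)%Z (hq (m - 1)%Z)))) (NGm _ _)
      (Pany_const _) (PGp _ _) (dGm _ _) (fun _ _ => Mdet_id)) with (l := l) as [E1 E2]; auto.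
    - intros l0 Hl0. rewrite <- hGdec, Mmul_id_r by auto. rewrite EF' by auto. f_equal. apply Dm_; auto.
    - rewrite <- E1, <- E2. rewrite EF' by auto. split; [f_equal; apply Dm_; auto| reflexivity]. }
  assert (Dall : forall m, Dd m) by (apply Z_ind_both; auto).
  split; [|split; [|split]].
  - intros n m m' l Hl. rewrite (P1' n m l Hl), (P1' n m' l Hl). reflexivity.
  - intros n n' m l Hl. rewrite (G2' n m l Hl), (G2' n' m l Hl). reflexivity.
  - intros n m l Hl. rewrite (P1' n m l Hl), (P1' (n + 1)%Z m l Hl).
    destruct (Up n (Call n) l Hl) as [E _]. rewrite <- E.
    rewrite Minv_det1 by (apply dFp; auto). rewrite <- Mmul_assoc, adj_mul_id by (apply dFp; auto).
    apply Mmul_id_l.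
  - intros n m l Hl. rewrite (G2' n m l Hl), (G2' n (m + 1)%Z l Hl).
    destruct (Dall m l Hl) as [E1 _]. destruct (Dall (m + 1)%Z l Hl) as [E2 _].
    rewrite E1, E2, FV by auto.
    rewrite Minv_det1 by (apply dF; auto). rewrite <- Mmul_assoc, adj_mul_id by (apply dF; auto).
    rewrite Mmul_id_l. apply V_xi.
Qed.
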